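(* Let $p\in(0,1]$ and let $\bar Q=(\bar q_{j,k})_{j,k\geq1}$ be the generator on $\mathbb N=\{1,2,\dots\}$ with $\bar q_{j,k}=\binom{j-1}{k-1}p^k(1-p)^{j-k}$ for $1\leq k\leq j-1$, $\bar q_{j,j+1}=(j+1)p$, $\bar q_{j,j}=p^j-(2+j)p$, and $\bar q_{j,k}=0$ otherwise. Let $q>0$. \begin{enumerate} \item If $-1+q+p^q<0$, then $\bar Q$ is positive recurrent and its stationary distribution has a finite $q$th moment. \item If $p^q=1-q$, $p<e^{-1}$ and $r>0$, then $\bar Q$ is positive recurrent and a random variable $X$ with its stationary distribution satisfies $\mathbb E\big(X^q(\log(X+1))^{-(r+1)}\big)<\infty$. \end{enumerate} *)

(* Defs.v *)
From Stdlib Require Import Reals Lra Lia Arith Relations.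
From Coquelicot Require Import Coquelicot.
Open Scope R_scope.

(** States: the state space N = {1,2,...} of the paper is encoded by nat,
    state [n : nat] standing for the paper's state [j = n+1]. *)

(** Sum of a (nonnegative) real series, as a value in Rbar
    (limit of partial sums; for nonnegative terms it always exists in [0,+oo]). *)
Definition psum (f : nat -> R) : Rbar := Lim_seq (sum_n f).

Definition qout (Q : nat -> nat -> R) (i : nat) : R := - Q i i.

Definition Pi (Q : nat -> nat -> R) (i k : nat) : R :=
  if Req_EM_T (qout Q i) 0 then (if Nat.eqb i k then 1 else 0)
  else (if Nat.eqb i k then 0 else Q i k / qout Q i).

(** Taboo probabilities of the jump chain started at i:
    [taboo Q i n y] = P_i(Y_{n+1} = y, Y_1 <> i, ..., Y_n <> i). *)
Fixpoint taboo (Q : nat -> nat -> R) (i : nat) (n : nat) (y : nat) : R :=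
  match n with
  | O => Pi Q i y
  | S m => real (psum (fun z => if Nat.eqb z i then 0 else taboo Q i m z * Pi Q z y))
  end.

Definition return_prob (Q : nat -> nat -> R) (i : nat) : Rbar :=
  psum (fun n => taboo Q i n i).

(** Expected time spent (holding times) in the (n+2)-th visited state
    before the first return to i, restricted to the event of no return yet. *)
Definition exp_hold (Q : nat -> nat -> R) (i n : nat) : Rbar :=
  psum (fun z => if Nat.eqb z i then 0 else taboo Q i n z / qout Q z).

(** State i is positive recurrent for the (minimal) continuous-time chain
    with generator Q: the chain leaves i, returns to i almost surely (in
    finitely many jumps, hence without explosion), and the expected return
    time  m_i = 1/q_i + sum_n sum_{z<>i} P_i(Y_{n+1}=z, no return yet)/q_z
    is finite. *)
Definition pos_rec_state (Q : nat -> nat -> R) (i : nat) : Prop :=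
  0 < qout Q i /\
  return_prob Q i = Finite 1 /\
  (forall n, Rbar_lt (exp_hold Q i n) p_infty) /\
  Rbar_lt (psum (fun n => real (exp_hold Q i n))) p_infty.

Definition edge (Q : nat -> nat -> R) (a b : nat) : Prop := a <> b /\ 0 < Q a b.

Definition irreducible (Q : nat -> nat -> R) : Prop :=
  forall i k, clos_refl_trans nat (edge Q) i k.

Definition positive_recurrent (Q : nat -> nat -> R) : Prop :=
  irreducible Q /\ forall i, pos_rec_state Q i.

(** Stationary (invariant) distribution: a probability vector pi with
    pi Q = 0, written as global balance
    sum_{j <> k} pi_j q_{j,k} = pi_k q_k  for every k. *)
Definition stationary (Q : nat -> nat -> R) (pi : nat -> R) : Prop :=
  (forall j, 0 <= pi j) /\
  psum pi = Finite 1 /\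
  (forall k, psum (fun j => if Nat.eqb j k then 0 else pi j * Q j k)
             = Finite (pi k * qout Q k)).

(** The generator \bar Q of the paper, with state n <-> j = n+1,
    state m <-> k = m+1:
    - k <= j-1 :  binom(j-1,k-1) p^k (1-p)^(j-k) = C n m p^(m+1) (1-p)^(n-m)
    - k = j+1  :  (j+1) p = (n+2) p
    - k = j    :  p^j - (2+j) p = p^(n+1) - (n+3) p
    - otherwise 0. *)
Definition qbar (p : R) (n m : nat) : R :=
  if Nat.ltb m n then Binomial.C n m * p ^ (S m) * (1 - p) ^ (n - m)
  else if Nat.eqb m (S n) then INR (n + 2) * p
  else if Nat.eqb m n then p ^ (S n) - INR (n + 3) * p
  else 0.

(** E(X^q) for X distributed as pi (X = n+1 on state n). *)
Definition moment (pi : nat -> R) (q : R) : Rbar :=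
  psum (fun n => pi n * Rpower (INR (S n)) q).

Definition log_moment (pi : nat -> R) (q r : R) : Rbar :=
  psum (fun n => pi n * (Rpower (INR (S n)) q * Rpower (ln (INR (S n) + 1)) (- (r + 1)))).

(* Main.v *)
Require Import Defs.
From Stdlib Require Import Reals Lra Lia Relations.
From Coquelicot Require Import Coquelicot.
Open Scope R_scope.


Lemma sum_n_nonneg (a : nat -> R) n : (forall k, 0 <= a k) -> 0 <= sum_n a n.
Proof.
  intros H; induction n. rewrite sum_O; auto.
  rewrite sum_Sn. unfold plus; simpl. specialize (H (S n)). lra.
Qed.

Lemma sum_n_mono_le (a b : nat -> R) n : (forall k, (k <= n)%nat -> a k <= b k) -> sum_n a n <= sum_n b n.
Proof.
  intros H; induction n. rewrite !sum_O; auto.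
  rewrite !sum_Sn. unfold plus; simpl.
  assert (sum_n a n <= sum_n b n) by (apply IHn; intros; apply H; lia).
  specialize (H (S n) (le_n _)). lra.
Qed.

Lemma sum_n_incr (a : nat -> R) n : (forall k, 0 <= a k) -> sum_n a n <= sum_n a (S n).
Proof. intros H; rewrite sum_Sn; unfold plus; simpl; specialize (H (S n)); lra. Qed.

Lemma sum_n_incr_le (a : nat -> R) n m : (forall k, 0 <= a k) -> (n <= m)%nat -> sum_n a n <= sum_n a m.
Proof.
  intros H Hnm; induction Hnm. lra. eapply Rle_trans. apply IHHnm. apply sum_n_incr; auto.
Qed.

Lemma series_partial_le (a : nat -> R) l n : (forall k, 0 <= a k) -> is_series a l -> sum_n a n <= l.
Proof.
  intros H Hs. apply (is_lim_seq_incr_compare (sum_n a) l); [exact Hs|].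
  intros; apply sum_n_incr; auto.
Qed.

Lemma series_le_bound (a : nat -> R) l M : is_series a l -> (forall n, sum_n a n <= M) -> l <= M.
Proof.
  intros Hs HM. 
  assert (H := is_lim_seq_le (sum_n a) (fun _ => M) l M HM Hs (is_lim_seq_const M)).
  simpl in H; exact H.
Qed.

Lemma series_ge_bound (a : nat -> R) l M : is_series a l -> (forall n, M <= sum_n a n) -> M <= l.
Proof.
  intros Hs HM. 
  assert (H := is_lim_seq_le (fun _ => M) (sum_n a) M l HM (is_lim_seq_const M) Hs).
  simpl in H; exact H.
Qed.

Lemma nn_series_bounded (a : nat -> R) M : (forall k, 0 <= a k) -> (forall n, sum_n a n <= M) ->
  exists l, is_series a l /\ l <= M.
Proof.
  intros H HM.
  assert (Hex : ex_lim_seq (sum_n a)) by (apply ex_lim_seq_incr; intros; apply sum_n_incr; auto).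
  assert (Hc := Lim_seq_correct _ Hex).
  assert (Hle : Rbar_le (Lim_seq (sum_n a)) M).
  { apply (is_lim_seq_le (sum_n a) (fun _ => M)); auto. apply is_lim_seq_const. }
  assert (Hge : Rbar_le (sum_n a 0) (Lim_seq (sum_n a))).
  { apply (is_lim_seq_le (fun _ => sum_n a 0) (sum_n a)); auto.
    intros; apply sum_n_incr_le; auto; lia. apply is_lim_seq_const. }
  destruct (Lim_seq (sum_n a)) as [l| |] eqn:E; simpl in Hle, Hge; try contradiction.
  exists l; split; auto.
Qed.

Lemma psum_series (a : nat -> R) l : is_series a l -> psum a = Finite l.
Proof. intros H. unfold psum. apply is_lim_seq_unique. exact H. Qed.

Lemma series_psum (a : nat -> R) l : (forall k, 0 <= a k) -> psum a = Finite l -> is_series a l.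
Proof.
  intros H Hp. unfold psum in Hp.
  assert (Hex : ex_lim_seq (sum_n a)) by (apply ex_lim_seq_incr; intros; apply sum_n_incr; auto).
  assert (Hc := Lim_seq_correct _ Hex). rewrite Hp in Hc. exact Hc.
Qed.

Lemma psum_lt_bounded (a : nat -> R) M : (forall k, 0 <= a k) -> (forall n, sum_n a n <= M) ->
  Rbar_lt (psum a) p_infty.
Proof.
  intros H HM. destruct (nn_series_bounded a M H HM) as [l [Hl _]].
  rewrite (psum_series _ _ Hl). simpl; auto.
Qed.

Lemma series_nonneg (a : nat -> R) l : (forall k, 0 <= a k) -> is_series a l -> 0 <= l.
Proof.
  intros H Hs. eapply Rle_trans. apply (sum_n_nonneg a 0 H). apply (series_partial_le a l 0 H Hs).
Qed.

Lemma series_term_le (a : nat -> R) l n : (forall k, 0 <= a k) -> is_series a l -> a n <= l.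
Proof.
  intros H Hs. eapply Rle_trans. 2: apply (series_partial_le a l n H Hs).
  destruct n. rewrite sum_O; lra. rewrite sum_Sn. unfold plus; simpl.
  assert (0 <= sum_n a n) by (apply sum_n_nonneg; auto). lra.
Qed.

Lemma is_series_extR (a b : nat -> R) l : is_series a l -> (forall n, a n = b n) -> is_series b l.
Proof. intros H E. exact (is_series_ext a b l E H). Qed.

Lemma is_series_R_plus (a b : nat -> R) la lb : is_series a la -> is_series b lb ->
  is_series (fun n => a n + b n) (la + lb).
Proof. intros. apply (is_series_plus a b la lb); auto. Qed.

Lemma is_series_R_scal (c : R) (a : nat -> R) l : is_series a l ->
  is_series (fun n => c * a n) (c * l).
Proof. intros. apply (is_series_scal c a l); auto. Qed.

Lemma is_series_R_opp (a : nat -> R) l : is_series a l -> is_series (fun n => - a n) (- l).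
Proof. intros H. replace (- l) with ((-1) * l) by ring.
  assert (H1 := is_series_R_scal (-1) a l H).
  refine (is_series_ext _ _ _ _ H1). intros; simpl; ring. Qed.

Lemma is_series_R_minus (a b : nat -> R) la lb : is_series a la -> is_series b lb ->
  is_series (fun n => a n - b n) (la - lb).
Proof. intros. apply is_series_R_plus; auto. apply is_series_R_opp; auto. Qed.

Lemma is_series_of_lim (a : nat -> R) l : is_lim_seq (sum_n a) (Finite l) -> is_series a l.
Proof. auto. Qed.
Lemma lim_of_is_series (a : nat -> R) l : is_series a l -> is_lim_seq (sum_n a) (Finite l).
Proof. auto. Qed.

Lemma sum_n_single (k : nat) (c : R) n :
  sum_n (fun m => if Nat.eqb m k then c else 0) n = if Nat.leb k n then c else 0.
Proof.
  induction n.
  - rewrite sum_O. destruct k; simpl; auto.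
  - rewrite sum_Sn, IHn.
    destruct (Nat.leb_spec k n), (Nat.leb_spec k (S n)), (Nat.eqb_spec (S n) k); try lia; unfold plus; simpl; lra.
Qed.

Lemma is_series_single (k : nat) (c : R) : is_series (fun n => if Nat.eqb n k then c else 0) c.
Proof.
  apply is_series_of_lim. apply is_lim_seq_spec. intros eps. exists k. intros n Hn.
  rewrite sum_n_single. destruct (Nat.leb_spec k n); [|lia].
  rewrite Rminus_eq_0, Rabs_R0. apply cond_pos.
Qed.

Lemma is_series_modify (a : nat -> R) l k c : is_series a l ->
  is_series (fun n => if Nat.eqb n k then c else a n) (l - a k + c).
Proof.
  intros H. eapply is_series_extR.
  apply is_series_R_plus. apply is_series_R_minus. apply H. apply (is_series_single k (a k)). apply (is_series_single k c).
  intros n; simpl; destruct (Nat.eqb_spec n k); subst; ring.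
Qed.

Lemma ex_series_of_is (a : nat -> R) l : is_series a l -> ex_series a.
Proof. intros H; exists l; auto. Qed.

Lemma is_series_sum_n (a : nat -> nat -> R) (A : nat -> R) N :
  (forall y, (y <= N)%nat -> is_series (fun z => a z y) (A y)) ->
  is_series (fun z => sum_n (fun y => a z y) N) (sum_n A N).
Proof.
  induction N; intros H.
  - rewrite sum_O. eapply is_series_extR. apply H. auto. intros; rewrite sum_O; auto.
  - rewrite sum_Sn. eapply is_series_extR. 
    apply is_series_R_plus. apply IHN; intros; apply H; lia. apply (H (S N)); lia.
    intros; rewrite sum_Sn; auto.
Qed.

Lemma tonelli (a : nat -> nat -> R) (A : nat -> R) S :
  (forall z y, 0 <= a z y) -> (forall z, is_series (a z) (A z)) -> is_series A S ->
  (forall y, ex_series (fun z => a z y)) /\ is_series (fun y => Series (fun z => a z y)) S.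
Proof.
  intros Hnn HA HS.
  assert (HAnn : forall z, 0 <= A z) by (intros z; apply (series_nonneg (a z)); auto).
  assert (Hcol : forall y, ex_series (fun z => a z y)).
  { intros y. destruct (nn_series_bounded (fun z => a z y) S) as [l [Hl _]]; auto.
    intros n. eapply Rle_trans. apply (sum_n_mono_le _ A). intros; apply (series_term_le (a k)); auto.
    apply series_partial_le; auto. exists l; auto. }
  split; auto.
  set (B := fun y => Series (fun z => a z y)).
  assert (HB : forall y, is_series (fun z => a z y) (B y)) by (intros; apply Series_correct; auto).
  assert (HBnn : forall y, 0 <= B y) by (intros y; apply (series_nonneg (fun z => a z y)); auto).
  assert (Hpart : forall Y, sum_n B Y <= S).
  { intros Y. assert (H := is_series_sum_n a B Y (fun y _ => HB y)).
    apply (series_le_bound _ _ _ H). intros n.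
    apply Rle_trans with (sum_n A n). apply sum_n_mono_le; intros z _; apply series_partial_le; auto.
    apply series_partial_le; auto. }
  destruct (nn_series_bounded B S HBnn Hpart) as [l [Hl HlS]].
  assert (HSl : S <= l).
  { apply (series_le_bound A S l HS). intros n.
    assert (H := is_series_sum_n (fun y z => a z y) A n (fun z _ => HA z)).
    apply (series_le_bound _ _ _ H). intros Y.
    apply Rle_trans with (sum_n B Y). apply sum_n_mono_le; intros y _. 
    apply (series_partial_le (fun z => a z y)); auto.
    apply series_partial_le; auto. }
  replace S with l by lra. exact Hl.
Qed.

Lemma series_le_series (a b : nat -> R) la lb : (forall k, a k <= b k) -> is_series a la -> is_series b lb -> la <= lb.
Proof.
  intros H Ha Hb. assert (Hc := is_lim_seq_le (sum_n a) (sum_n b) la lb).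
  simpl in Hc. apply Hc; auto. intros n. apply sum_n_mono_le; auto.
Qed.

Lemma series_compare (a b : nat -> R) lb : (forall k, 0 <= a k <= b k) -> is_series b lb ->
  exists la, is_series a la /\ la <= lb.
Proof.
  intros H Hb. apply nn_series_bounded. intros k; apply H.
  intros n. apply Rle_trans with (sum_n b n). apply sum_n_mono_le; intros; apply H.
  apply series_partial_le; auto. intros k; specialize (H k); lra.
Qed.

Lemma series_unique (a : nat -> R) l1 l2 : is_series a l1 -> is_series a l2 -> l1 = l2.
Proof. intros H1 H2. rewrite <- (is_series_unique a l1 H1). apply is_series_unique; auto. Qed.

Lemma series_term_lim0 (a : nat -> R) l : is_series a l -> is_lim_seq a 0.
Proof. intros H. apply ex_series_lim_0. exists l; auto. Qed.


Ltac req := match goal with |- @eq _ ?a ?b => change (@eq R a b) end.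

Lemma sum_n_shift (a : nat -> R) n : sum_n a (S n) = a 0%nat + sum_n (fun k => a (S k)) n.
Proof.
  induction n. rewrite sum_Sn, !sum_O. reflexivity.
  rewrite sum_Sn, IHn, sum_Sn. unfold plus; simpl; ring.
Qed.

Lemma sum_n_Rplus (a b : nat -> R) n : sum_n (fun k => a k + b k) n = sum_n a n + sum_n b n.
Proof. apply (sum_n_plus a b n). Qed.

Lemma sum_n_Rscal (c : R) (a : nat -> R) n : sum_n (fun k => c * a k) n = c * sum_n a n.
Proof. apply (sum_n_scal_l c a n). Qed.

Lemma sum_n_Rminus (a b : nat -> R) n : sum_n (fun k => a k - b k) n = sum_n a n - sum_n b n.
Proof.
  replace (sum_n a n - sum_n b n) with (sum_n a n + (-1) * sum_n b n) by ring.
  rewrite <- sum_n_Rscal, <- sum_n_Rplus. apply sum_n_ext. intros k. change (a k - b k = a k + -1 * b k). ring.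
Qed.

Lemma sum_n_const_R (c : R) n : sum_n (fun _ => c) n = INR (S n) * c.
Proof.
  induction n. rewrite sum_O; simpl; ring.
  rewrite sum_Sn, IHn. rewrite (S_INR (S n)). unfold plus. req. simpl. ring.
Qed.

Lemma sum_n_zero n : sum_n (fun _ => 0) n = 0.
Proof. rewrite sum_n_const_R; req; ring. Qed.

Lemma sum_n_ext_le (a b : nat -> R) n : (forall k, (k <= n)%nat -> a k = b k) -> sum_n a n = sum_n b n.
Proof. apply sum_n_ext_loc. Qed.

Lemma is_series_finite (a : nat -> R) N : (forall k, (N < k)%nat -> a k = 0) -> is_series a (sum_n a N).
Proof.
  intros H. apply is_series_of_lim. apply is_lim_seq_spec. intros eps. exists N. intros n Hn.
  replace (sum_n a n) with (sum_n a N). rewrite Rminus_eq_0, Rabs_R0. apply cond_pos.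
  induction Hn. auto. rewrite sum_Sn, <- IHHn, H by lia. unfold plus; simpl; req; lra.
Qed.

Section Chain.
Variable p : R.
Hypothesis hp0 : 0 < p.
Hypothesis hp1 : p < 1.

Definition w (j m : nat) : R := Binomial.C j m * p ^ m * (1 - p) ^ (j - m).

Lemma w_nonneg j m : 0 <= w j m.
Proof.
  unfold w, Binomial.C. apply Rmult_le_pos. apply Rmult_le_pos.
  apply Rle_mult_inv_pos. apply pos_INR. apply Rmult_lt_0_compat; apply INR_fact_lt_0.
  apply pow_le; lra. apply pow_le; lra.
Qed.

Lemma w_sum j : sum_n (w j) j = 1.
Proof.
  rewrite sum_n_Reals. unfold w. rewrite <- binomial. replace (p + (1 - p)) with 1 by ring. apply pow1.
Qed.

Lemma C_mean j m : (m <= j)%nat -> Binomial.C (S j) (S m) * INR (S m) = INR (S j) * Binomial.C j m.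
Proof.
  intros H. unfold Binomial.C. replace (S j - S m)%nat with (j - m)%nat by lia.
  rewrite !fact_simpl. rewrite !mult_INR.
  assert (H1 := INR_fact_neq_0 m). assert (H2 := INR_fact_neq_0 (j - m)).
  assert (H3 : INR (S m) <> 0) by (apply not_0_INR; lia).
  field. auto.
Qed.

Lemma w_mean j : sum_n (fun m => w j m * INR m) j = INR j * p.
Proof.
  destruct j as [|j]. rewrite sum_O. simpl. ring.
  rewrite sum_n_shift. simpl INR at 1. rewrite Rmult_0_r, Rplus_0_l.
  transitivity (sum_n (fun m => (INR (S j) * p) * w j m) j).
  - apply sum_n_ext_le. intros m Hm. unfold w.
    replace (S j - S m)%nat with (j - m)%nat by lia.
    replace (Binomial.C (S j) (S m) * p ^ S m * (1 - p) ^ (j - m) * INR (S m))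
      with ((Binomial.C (S j) (S m) * INR (S m)) * p ^ S m * (1 - p) ^ (j - m)) by ring.
    rewrite C_mean by lia. simpl. ring.
  - rewrite sum_n_Rscal, w_sum. req; ring.
Qed.

Notation Q := (qbar p).

Lemma Q_lt j m : (m < j)%nat -> Q j m = p * w j m.
Proof.
  intros H. unfold qbar, w. destruct (Nat.ltb_spec m j); [|lia]. simpl. ring.
Qed.

Lemma Q_up j : Q j (S j) = INR (j + 2) * p.
Proof.
  unfold qbar. destruct (Nat.ltb_spec (S j) j); [lia|]. rewrite Nat.eqb_refl. auto.
Qed.

Lemma Q_diag j : Q j j = p ^ (S j) - INR (j + 3) * p.
Proof.
  unfold qbar. destruct (Nat.ltb_spec j j); [lia|]. destruct (Nat.eqb_spec j (S j)); [lia|].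
  rewrite Nat.eqb_refl. auto.
Qed.

Lemma Q_far j k : (S j < k)%nat -> Q j k = 0.
Proof.
  intros H. unfold qbar. destruct (Nat.ltb_spec k j); [lia|]. destruct (Nat.eqb_spec k (S j)); [lia|].
  destruct (Nat.eqb_spec k j); [lia|]. auto.
Qed.

Lemma Q_offdiag_nonneg j k : j <> k -> 0 <= Q j k.
Proof.
  intros H. destruct (Nat.lt_ge_cases k j).
  - rewrite Q_lt by auto. apply Rmult_le_pos; [lra|apply w_nonneg].
  - destruct (Nat.eq_dec k (S j)). subst. rewrite Q_up. apply Rmult_le_pos; [apply pos_INR|lra].
    rewrite Q_far by lia. lra.
Qed.

Lemma pow_le1 n : 0 <= p ^ n <= 1.
Proof.
  induction n. simpl; lra. simpl. split. apply Rmult_le_pos; lra.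
  rewrite <- (Rmult_1_r 1). apply Rmult_le_compat; lra.
Qed.

Lemma pow_le_p n : p ^ (S n) <= p.
Proof. simpl. destruct (pow_le1 n). nra. Qed.

Definition q_(j : nat) : R := INR (j + 3) * p - p ^ (S j).

Lemma qout_eq j : qout Q j = q_ j.
Proof. unfold qout, q_. rewrite Q_diag. ring. Qed.

Lemma q_pos j : 0 < q_ j.
Proof.
  unfold q_. assert (H := pow_le_p j). rewrite plus_INR. assert (0 <= INR j) by apply pos_INR.
  simpl INR. nra.
Qed.

Lemma q_ge j : 2 * p <= q_ j.
Proof.
  unfold q_. assert (H := pow_le_p j). rewrite plus_INR. assert (0 <= INR j) by apply pos_INR.
  simpl INR. nra.
Qed.

Lemma q_le j : q_ j <= INR (j + 3) * p.
Proof. unfold q_. assert (0 <= p ^ S j) by (apply pow_le; lra). lra. Qed.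

Definition Dq (F : nat -> R) (j : nat) : R := sum_n (fun k => Q j k * (F k - F j)) (S j).

Lemma D_formula F j : Dq F j = INR (j + 2) * p * (F (S j) - F j) + p * sum_n (fun m => w j m * (F m - F j)) j.
Proof.
  unfold Dq. rewrite sum_Sn. rewrite Q_up. unfold plus; simpl. 
  rewrite Rplus_comm. f_equal.
  rewrite <- sum_n_Rscal. apply sum_n_ext_le. intros k Hk.
  destruct (Nat.eq_dec k j). subst. rewrite !Rminus_eq_0. ring.
  rewrite Q_lt by lia. ring.
Qed.

Lemma D_ext F G j : (forall k, (k <= S j)%nat -> F k = G k) -> Dq F j = Dq G j.
Proof.
  intros H. unfold Dq. apply sum_n_ext_le. intros k Hk. rewrite !H by lia. auto.
Qed.

Lemma D_lin a b F G j : Dq (fun k => a * F k + b * G k) j = a * Dq F j + b * Dq G j.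
Proof.
  unfold Dq. rewrite <- !sum_n_Rscal, <- sum_n_Rplus. apply sum_n_ext. intros k. req. ring.
Qed.

Lemma D_const c j : Dq (fun _ => c) j = 0.
Proof. unfold Dq. rewrite <- (sum_n_zero (S j)). apply sum_n_ext. intros; req; ring. Qed.

Lemma D_plus F G j : Dq (fun k => F k + G k) j = Dq F j + Dq G j.
Proof.
  rewrite <- (Rmult_1_l (Dq F j)), <- (Rmult_1_l (Dq G j)), <- D_lin. apply D_ext. intros; ring.
Qed.

Lemma D_scal a F j : Dq (fun k => a * F k) j = a * Dq F j.
Proof.
  replace (a * Dq F j) with (a * Dq F j + 0 * Dq F j) by ring. rewrite <- D_lin. apply D_ext. intros; ring.
Qed.

Lemma w_jj j : w j j = p ^ j.
Proof.
  unfold w, Binomial.C. rewrite Nat.sub_diag. simpl. 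
  assert (H1 := INR_fact_neq_0 j). field. auto.
Qed.

Lemma w_j0 j : w j 0 = (1 - p) ^ j.
Proof.
  unfold w, Binomial.C. rewrite Nat.sub_0_r. simpl. 
  assert (H1 := INR_fact_neq_0 j). field. auto.
Qed.

Lemma row_sum j : sum_n (fun k => Q j k) (S j) = 0.
Proof.
  rewrite sum_Sn, Q_up.
  replace (sum_n (fun k => Q j k) j) with 
    (sum_n (fun k => p * w j k + (if Nat.eqb k j then Q j j - p * w j j else 0)) j).
  2: { apply sum_n_ext_le. intros k Hk. destruct (Nat.eqb_spec k j). subst; ring.
       rewrite Q_lt by lia. ring. }
  rewrite sum_n_Rplus, sum_n_Rscal, w_sum, sum_n_single, Nat.leb_refl, Q_diag, w_jj.
  unfold plus; simpl. req. rewrite !plus_INR. simpl. ring.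
Qed.

Lemma D_is F j : Dq F j = sum_n (fun k => Q j k * F k) (S j).
Proof.
  unfold Dq. replace (sum_n (fun k => Q j k * F k) (S j)) with 
    (sum_n (fun k => Q j k * F k) (S j) - F j * sum_n (fun k => Q j k) (S j)).
  2: { rewrite row_sum. ring. }
  rewrite <- sum_n_Rscal, <- sum_n_Rminus. apply sum_n_ext. intros; req; ring.
Qed.

Notation Pq := (Pi (qbar p)).

Lemma Pi_eq j y : Pq j y = if Nat.eqb j y then 0 else Q j y / q_ j.
Proof.
  unfold Pi. rewrite qout_eq. destruct (Req_EM_T (q_ j) 0). assert (H := q_pos j). lra. auto.
Qed.

Lemma Pi_nonneg j y : 0 <= Pq j y.
Proof.
  rewrite Pi_eq. destruct (Nat.eqb_spec j y). lra. 
  apply Rle_mult_inv_pos. apply Q_offdiag_nonneg; auto. apply q_pos.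
Qed.

Lemma Pi_far j y : (S j < y)%nat -> Pq j y = 0.
Proof.
  intros H. rewrite Pi_eq. destruct (Nat.eqb_spec j y). lra. rewrite Q_far by auto. unfold Rdiv; ring.
Qed.

Lemma Pi_diag j : Pq j j = 0.
Proof. rewrite Pi_eq, Nat.eqb_refl. auto. Qed.

Lemma PV_formula V j : sum_n (fun y => Pq j y * V y) (S j) = V j + Dq V j / q_ j.
Proof.
  rewrite D_is.
  replace (sum_n (fun y => Pq j y * V y) (S j)) with
    (/ q_ j * (sum_n (fun k => Q j k * V k) (S j) + sum_n (fun k => if Nat.eqb k j then - (Q j j * V j) else 0) (S j))).
  2: { rewrite <- sum_n_Rplus, <- sum_n_Rscal. apply sum_n_ext. intros k. rewrite Pi_eq.
       destruct (Nat.eqb_spec j k), (Nat.eqb_spec k j); subst; try lia; req; unfold Rdiv; ring. }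
  rewrite sum_n_single. destruct (Nat.leb_spec j (S j)); [|lia].
  rewrite Q_diag. unfold q_. assert (Hq := q_pos j). unfold q_ in Hq. req. field. lra.
Qed.

Lemma PV_series V j : is_series (fun y => Pq j y * V y) (V j + Dq V j / q_ j).
Proof.
  rewrite <- PV_formula. apply is_series_finite. intros k Hk. rewrite Pi_far by auto. ring.
Qed.

Lemma Pi_row j : is_series (fun y => Pq j y) 1.
Proof.
  eapply is_series_extR. 
  replace 1 with (1 + Dq (fun _ => 1) j / q_ j). apply (PV_series (fun _ => 1) j).
  rewrite D_const. unfold Rdiv; ring. intros; simpl; ring.
Qed.

End Chain.


Lemma psum_ext (f g : nat -> R) : (forall n, f n = g n) -> psum f = psum g.
Proof. intros H. unfold psum. apply Lim_seq_ext. intros n. apply sum_n_ext. auto. Qed.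

Section PosRec.
Variable p : R.
Hypothesis hp0 : 0 < p.
Hypothesis hp1 : p < 1.
Variable i : nat.
Variable V : nat -> R.
Hypothesis HV0 : forall z, 0 <= V z.
Hypothesis HVd : forall z, z <> i -> Dq p V z <= -1.
Hypothesis HVu : forall Mass, exists Z, forall z, (Z <= z)%nat -> Mass <= V z.

Notation Q := (qbar p).
Notation Pq := (Pi (qbar p)).
Definition h n y := taboo Q i n y.
Definition mask n z := if Nat.eqb z i then 0 else h n z.

Record good (n : nat) (Mn Wn : R) : Prop := {
  g_nn : forall y, 0 <= h n y;
  g_M : is_series (h n) Mn;
  g_W : is_series (fun y => h n y * V y) Wn }.

Lemma PV_nonneg z : 0 <= V z + Dq p V z / q_ p z.
Proof.
  rewrite <- PV_formula by auto. apply sum_n_nonneg. intros k.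
  apply Rmult_le_pos. apply Pi_nonneg; auto. auto.
Qed.

Lemma good0 : good 0 1 (V i + Dq p V i / q_ p i).
Proof.
  constructor.
  - intros y. unfold h; simpl. apply Pi_nonneg; auto.
  - unfold h; simpl. apply Pi_row; auto.
  - unfold h; simpl. apply PV_series; auto.
Qed.

Lemma mask_nn n Mn Wn : good n Mn Wn -> forall z, 0 <= mask n z.
Proof. intros G z. unfold mask. destruct (Nat.eqb z i). lra. apply G. Qed.

Lemma mask_series n Mn Wn : good n Mn Wn -> is_series (mask n) (Mn - h n i).
Proof.
  intros G. eapply is_series_extR. replace (Mn - h n i) with (Mn - h n i + 0) by ring.
  apply is_series_modify. apply G. intros z. unfold mask. auto.
Qed.

Lemma maskV_series n Mn Wn : good n Mn Wn -> is_series (fun z => mask n z * V z) (Wn - h n i * V i).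
Proof.
  intros G. eapply is_series_extR. replace (Wn - h n i * V i) with (Wn - h n i * V i + 0) by ring.
  apply (is_series_modify (fun y => h n y * V y)). apply G. intros z. unfold mask.
  destruct (Nat.eqb z i); simpl; ring.
Qed.

Lemma maskE_exists n Mn Wn : good n Mn Wn -> exists En, is_series (fun z => mask n z / q_ p z) En.
Proof.
  intros G. destruct (series_compare (fun z => mask n z / q_ p z) (fun z => / (2 * p) * mask n z)
     (/ (2 * p) * (Mn - h n i))) as [En [HE _]].
  - intros z. assert (H1 := mask_nn n Mn Wn G z). assert (H2 := q_ge p hp0 hp1 z). assert (H3 := q_pos p hp0 hp1 z).
    split. apply Rle_mult_inv_pos; auto.
    unfold Rdiv. rewrite Rmult_comm. apply Rmult_le_compat_r; auto. apply Rinv_le_contravar; lra.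
  - apply is_series_R_scal. eapply mask_series; eauto.
  - exists En; auto.
Qed.

Definition Eh n := Series (fun z => mask n z / q_ p z).

Lemma E_series n Mn Wn : good n Mn Wn -> is_series (fun z => mask n z / q_ p z) (Eh n).
Proof.
  intros G. destruct (maskE_exists n Mn Wn G) as [En HE]. unfold Eh. rewrite (is_series_unique _ _ HE). auto.
Qed.

Lemma E_nn n Mn Wn : good n Mn Wn -> 0 <= Eh n.
Proof.
  intros G. apply (series_nonneg _ _ (fun z => Rle_mult_inv_pos _ _ (mask_nn n Mn Wn G z) (q_pos p hp0 hp1 z))).
  eapply E_series; eauto.
Qed.

Lemma h_S n y : h (S n) y = Series (fun z => mask n z * Pq z y) \/ True.
Proof. right; auto. Qed.

Lemma step n Mn Wn : good n Mn Wn ->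
  exists Wt', good (S n) (Mn - h n i) Wt' /\ Wt' <= Wn - h n i * V i - Eh n.
Proof.
  intros G.
  assert (Hm := mask_series n Mn Wn G).
  assert (Hmnn := mask_nn n Mn Wn G).
  destruct (tonelli (fun z y => mask n z * Pq z y) (fun z => mask n z) (Mn - h n i)) as [Hcol Hsum].
  { intros; apply Rmult_le_pos; auto. apply Pi_nonneg; auto. }
  { intros z. assert (H := is_series_R_scal (mask n z) _ _ (Pi_row p hp0 hp1 z)).
    rewrite Rmult_1_r in H. exact H. }
  { auto. }
  assert (Hh : forall y, h (S n) y = Series (fun z => mask n z * Pq z y)).
  { intros y. unfold h at 1. simpl. 
    rewrite (psum_ext _ (fun z => mask n z * Pq z y)).
    rewrite (psum_series _ _ (Series_correct _ (Hcol y))). simpl. auto.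
    intros z. unfold mask, h. destruct (Nat.eqb z i); ring. }
  assert (Hhnn : forall y, 0 <= h (S n) y).
  { intros y. rewrite Hh. apply (series_nonneg (fun z => mask n z * Pq z y)).
    intros; apply Rmult_le_pos; auto. apply Pi_nonneg; auto. apply Series_correct; auto. }
  assert (HE := E_series n Mn Wn G).
  assert (HmV := maskV_series n Mn Wn G).
  destruct (series_compare (fun z => mask n z * (V z + Dq p V z / q_ p z))
             (fun z => mask n z * V z - mask n z / q_ p z) (Wn - h n i * V i - Eh n)) as [S' [HS' HS'le]].
  { intros z. split. apply Rmult_le_pos; auto. apply PV_nonneg.
    unfold mask. destruct (Nat.eqb_spec z i). lra.
    assert (Hd := HVd z n0). assert (Hq := q_pos p hp0 hp1 z). assert (0 <= h n z) by apply G.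
    assert (Dq p V z / q_ p z <= - / q_ p z). 
    { unfold Rdiv. replace (- / q_ p z) with (-1 * / q_ p z) by ring. apply Rmult_le_compat_r; auto.
      left; apply Rinv_0_lt_compat; auto. }
    unfold Rdiv in *. nra. }
  { apply is_series_R_minus; auto. }
  destruct (tonelli (fun z y => mask n z * Pq z y * V y) (fun z => mask n z * (V z + Dq p V z / q_ p z)) S')
    as [_ HsumV].
  { intros; apply Rmult_le_pos; auto. apply Rmult_le_pos; auto. apply Pi_nonneg; auto. }
  { intros z. eapply is_series_extR. apply is_series_R_scal. apply PV_series; auto. intros; simpl; ring. }
  { auto. }
  exists S'. split; [|auto]. constructor; auto.
  - eapply is_series_extR. apply Hsum. intros y; simpl. rewrite Hh; auto.
  - eapply is_series_extR. apply HsumV. intros y; simpl. rewrite Hh. rewrite <- Series_scal_r. auto.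
Qed.

Definition Mass n := Series (h n).
Definition Wt n := Series (fun y => h n y * V y).

Lemma good_all n : good n (Mass n) (Wt n).
Proof.
  induction n.
  - assert (G := good0). unfold Mass, Wt.
    rewrite (is_series_unique _ _ (g_M _ _ _ G)), (is_series_unique _ _ (g_W _ _ _ G)). auto.
  - destruct (step n _ _ IHn) as [Wt' [G _]]. unfold Mass, Wt.
    rewrite (is_series_unique _ _ (g_M _ _ _ G)), (is_series_unique _ _ (g_W _ _ _ G)). auto.
Qed.

Lemma M_S n : Mass (S n) = Mass n - h n i.
Proof.
  destruct (step n _ _ (good_all n)) as [Wt' [G _]]. unfold Mass at 1.
  rewrite (is_series_unique _ _ (g_M _ _ _ G)). auto.
Qed.

Lemma W_S n : Wt (S n) <= Wt n - h n i * V i - Eh n.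
Proof.
  destruct (step n _ _ (good_all n)) as [Wt' [G H]]. unfold Wt at 1.
  rewrite (is_series_unique _ _ (g_W _ _ _ G)). auto.
Qed.

Lemma W_nn n : 0 <= Wt n.
Proof.
  apply (series_nonneg (fun y => h n y * V y)). intros; apply Rmult_le_pos; auto. apply (good_all n).
  apply (good_all n).
Qed.

Lemma M_nn n : 0 <= Mass n.
Proof. apply (series_nonneg (h n)). apply (good_all n). apply (good_all n). Qed.

Lemma h_nn n y : 0 <= h n y.
Proof. apply (good_all n). Qed.

Lemma E_sum N : sum_n Eh N <= Wt 0 - Wt (S N).
Proof.
  induction N.
  - rewrite sum_O. assert (H := W_S 0). assert (0 <= h 0 i * V i) by (apply Rmult_le_pos; auto; apply h_nn). lra.
  - rewrite sum_Sn. unfold plus; simpl. assert (H := W_S (S N)).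
    assert (0 <= h (S N) i * V i) by (apply Rmult_le_pos; auto; apply h_nn). lra.
Qed.

Lemma E_series_total : exists s, is_series Eh s /\ s <= Wt 0.
Proof.
  apply nn_series_bounded. intros; eapply E_nn; apply good_all.
  intros n. assert (H := E_sum n). assert (H2 := W_nn (S n)). lra.
Qed.

Lemma W_le n : Wt n <= Wt 0.
Proof.
  induction n. lra. assert (H := W_S n). assert (0 <= h n i * V i) by (apply Rmult_le_pos; auto; apply h_nn).
  assert (0 <= Eh n) by (eapply E_nn; apply good_all). lra.
Qed.

Lemma h_partial N : sum_n (fun n => h n i) N = 1 - Mass (S N).
Proof.
  induction N.
  - rewrite sum_O, M_S. unfold Mass. rewrite (is_series_unique _ _ (g_M _ _ _ good0)). req; ring.
  - rewrite sum_Sn, IHN, (M_S (S N)). unfold plus; simpl. req; ring.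
Qed.

Lemma M_lim : is_lim_seq Mass 0.
Proof.
  apply is_lim_seq_spec. intros eps.
  destruct (E_series_total) as [s [Hs _]].
  assert (HE0 := series_term_lim0 _ _ Hs).
  set (Mv := 2 * (Wt 0 + 1) / eps).
  destruct (HVu Mv) as [Z HZ].
  set (cZ := INR (Z + 3) * p).
  assert (HcZ : 0 < cZ) by (unfold cZ; apply Rmult_lt_0_compat; auto; apply lt_0_INR; lia).
  apply is_lim_seq_spec in HE0. 
  assert (He2 : 0 < eps / (2 * cZ)) by (apply Rdiv_lt_0_compat; [apply cond_pos|lra]).
  destruct (HE0 (mkposreal _ He2)) as [N HN].
  exists (S N). intros n Hn. destruct n as [|n]; [lia|].
  specialize (HN n ltac:(lia)). simpl in HN. rewrite Rminus_0_r in HN.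
  assert (HEn : 0 <= Eh n) by (eapply E_nn; apply good_all).
  rewrite Rabs_pos_eq in HN by auto.
  rewrite Rminus_0_r, Rabs_pos_eq by apply M_nn.
  assert (HMv : 0 < Mv).
  { unfold Mv. assert (0 <= Wt 0) by apply W_nn. apply Rdiv_lt_0_compat. lra. apply cond_pos. }
  assert (Hb : Mass (S n) <= cZ * Eh n + / Mv * (Wt n - h n i * V i)).
  { rewrite M_S. 
    assert (Hm := mask_series n _ _ (good_all n)).
    assert (HEs := E_series n _ _ (good_all n)).
    assert (HmV := maskV_series n _ _ (good_all n)).
    apply (series_le_series (mask n) (fun z => cZ * (mask n z / q_ p z) + / Mv * (mask n z * V z))).
    - intros z. assert (Hz := mask_nn n _ _ (good_all n) z). assert (Hq := q_pos p hp0 hp1 z).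
      destruct (Nat.lt_ge_cases z Z).
      + assert (q_ p z <= cZ).
        { apply Rle_trans with (INR (z + 3) * p). apply q_le; auto. unfold cZ.
          apply Rmult_le_compat_r. lra. apply le_INR; lia. }
        assert (0 <= / Mv * (mask n z * V z)).
        { apply Rmult_le_pos. left; apply Rinv_0_lt_compat; auto. apply Rmult_le_pos; auto. }
        assert (mask n z <= cZ * (mask n z / q_ p z)).
        { unfold Rdiv. replace (mask n z) with (q_ p z * (mask n z * / q_ p z)) at 1 by (field; lra).
          apply Rmult_le_compat_r. apply Rmult_le_pos; auto. left; apply Rinv_0_lt_compat; auto. auto. }
        lra.
      + assert (HV := HZ z H).
        assert (0 <= cZ * (mask n z / q_ p z)) by (apply Rmult_le_pos; [lra|apply Rle_mult_inv_pos; auto]).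
        assert (mask n z <= / Mv * (mask n z * V z)).
        { replace (mask n z) with (/ Mv * (mask n z * Mv)) at 1 by (field; lra).
          apply Rmult_le_compat_l. left; apply Rinv_0_lt_compat; auto. apply Rmult_le_compat_l; auto. }
        lra.
    - auto.
    - apply is_series_R_plus. apply is_series_R_scal; auto. apply is_series_R_scal; auto.
  }
  assert (HW := W_le n). assert (HW0 := W_nn 0).
  assert (0 <= h n i * V i) by (apply Rmult_le_pos; auto; apply h_nn).
  assert (cZ * Eh n < eps / 2).
  { replace (eps / 2) with (cZ * (eps / (2 * cZ))) by (field; lra). apply Rmult_lt_compat_l; auto. }
  assert (/ Mv * (Wt n - h n i * V i) <= / Mv * Wt 0).
  { apply Rmult_le_compat_l. left; apply Rinv_0_lt_compat; auto. lra. }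
  assert (/ Mv * Wt 0 < eps / 2).
  { unfold Mv. assert (He := cond_pos eps). 
    replace (/ (2 * (Wt 0 + 1) / eps) * Wt 0) with (eps / 2 * (Wt 0 / (Wt 0 + 1))) by (field; lra).
    rewrite <- (Rmult_1_r (eps / 2)) at 2. apply Rmult_lt_compat_l. lra.
    apply (Rmult_lt_reg_r (Wt 0 + 1)). lra. unfold Rdiv. rewrite Rmult_assoc, Rinv_l by lra. lra. }
  lra.
Qed.

Lemma exp_hold_eq n : exp_hold (qbar p) i n = Finite (Eh n).
Proof.
  unfold exp_hold. rewrite (psum_ext _ (fun z => mask n z / q_ p z)).
  apply psum_series. eapply E_series. apply good_all.
  intros z. unfold mask, h. rewrite qout_eq. destruct (Nat.eqb z i); auto. unfold Rdiv; ring.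
Qed.

Lemma return_series : is_series (fun n => h n i) 1.
Proof.
  apply is_series_of_lim. 
  apply (is_lim_seq_ext (fun N => 1 - Mass (S N))). intros N; rewrite h_partial; auto.
  replace (Finite 1) with (Finite (1 - 0)) by (f_equal; ring).
  apply is_lim_seq_minus'. apply is_lim_seq_const.
  apply (is_lim_seq_incr_1 Mass 0). apply M_lim.
Qed.

Lemma pos_rec : pos_rec_state (qbar p) i.
Proof.
  split; [|split; [|split]].
  - rewrite qout_eq. apply q_pos; auto.
  - unfold return_prob. apply psum_series. apply return_series.
  - intros n. rewrite exp_hold_eq. simpl; auto.
  - rewrite (psum_ext _ Eh). destruct E_series_total as [s [Hs _]]. rewrite (psum_series _ _ Hs). simpl; auto.
    intros n. rewrite exp_hold_eq. auto.
Qed.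

Lemma is_series_zero : is_series (fun _ : nat => 0) 0.
Proof. assert (H := is_series_single 0 0). refine (is_series_extR _ _ _ H _). intros m; destruct (Nat.eqb m 0); auto. Qed.

Lemma h_S_series n y : is_series (fun z => mask n z * Pq z y) (h (S n) y).
Proof.
  assert (G := good_all n).
  assert (Hm := mask_series n _ _ G).
  assert (Hmnn := mask_nn n _ _ G).
  destruct (tonelli (fun z y => mask n z * Pq z y) (fun z => mask n z) (Mass n - h n i)) as [Hcol Hsum].
  { intros; apply Rmult_le_pos; auto. apply Pi_nonneg; auto. }
  { intros z. assert (H := is_series_R_scal (mask n z) _ _ (Pi_row p hp0 hp1 z)).
    rewrite Rmult_1_r in H. exact H. }
  { auto. }
  replace (h (S n) y) with (Series (fun z => mask n z * Pq z y)). apply Series_correct; auto.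
  symmetry. unfold h at 1. simpl.
  rewrite (psum_ext _ (fun z => mask n z * Pq z y)).
  rewrite (psum_series _ _ (Series_correct _ (Hcol y))). simpl. auto.
  intros z. unfold mask, h. destruct (Nat.eqb z i); ring.
Qed.

Definition gam k := if Nat.eqb k i then 1 else Series (fun n => h n k).

Lemma h_le_E n k : k <> i -> h n k <= q_ p k * Eh n.
Proof.
  intros Hk. assert (Hq := q_pos p hp0 hp1 k).
  assert (H := series_term_le (fun z => mask n z / q_ p z) (Eh n) k).
  unfold mask in H. destruct (Nat.eqb_spec k i); [lia|].
  assert (h n k / q_ p k <= Eh n).
  { apply H. intros z. apply Rle_mult_inv_pos. eapply mask_nn, good_all. apply q_pos; auto.
    eapply E_series, good_all. }
  unfold Rdiv in H0. apply (Rmult_le_reg_r (/ q_ p k)). apply Rinv_0_lt_compat; auto.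
  rewrite (Rmult_comm (q_ p k)), Rmult_assoc, Rinv_r by lra. lra.
Qed.

Lemma gam_series k : is_series (fun n => h n k) (gam k).
Proof.
  unfold gam. destruct (Nat.eqb_spec k i).
  - subst. apply return_series.
  - destruct E_series_total as [s [Hs _]].
    destruct (series_compare (fun n => h n k) (fun n => q_ p k * Eh n) (q_ p k * s)) as [l [Hl _]].
    + intros m. split. apply h_nn. apply h_le_E; auto.
    + apply is_series_R_scal; auto.
    + rewrite (is_series_unique _ _ Hl). auto.
Qed.

Lemma gam_nn k : 0 <= gam k.
Proof. apply (series_nonneg (fun n => h n k)). intros; apply h_nn. apply gam_series. Qed.

Lemma gam_balance k : is_series (fun j => gam j * Pq j k) (gam k).
Proof.
  assert (HA : is_series (fun n => h (S n) k) (gam k - h 0 k)).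
  { assert (H := gam_series k). replace (gam k) with (plus (gam k - h 0 k) (h 0 k)) in H
      by (unfold plus; simpl; ring). exact (is_series_incr_1 _ _ H). }
  destruct (tonelli (fun n j => mask n j * Pq j k) (fun n => h (S n) k) (gam k - h 0 k)) as [Hcol Hsum].
  { intros; apply Rmult_le_pos. eapply mask_nn, good_all. apply Pi_nonneg; auto. }
  { intros n. apply h_S_series. }
  { auto. }
  assert (Hc : forall j, Series (fun n => mask n j * Pq j k) = (if Nat.eqb j i then 0 else gam j) * Pq j k).
  { intros j. unfold mask. destruct (Nat.eqb_spec j i).
    - rewrite (Series_ext _ (fun _ => 0)) by (intros; apply Rmult_0_l).
      rewrite (is_series_unique _ 0 is_series_zero). ring.
    - rewrite Series_scal_r. f_equal. unfold gam. destruct (Nat.eqb_spec j i); [lia|]. auto. }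
  assert (H2 := is_series_modify _ _ i (gam i * Pq i k) Hsum).
  eapply is_series_extR. 
  replace (gam k) with (gam k - h 0 k - Series (fun n => mask n i * Pq i k) + gam i * Pq i k).
  apply H2.
  rewrite Hc, Nat.eqb_refl. unfold gam; rewrite Nat.eqb_refl. unfold h; simpl. ring.
  intros j. simpl. destruct (Nat.eqb_spec j i). subst; auto. rewrite Hc.
  destruct (Nat.eqb_spec j i); [lia|]. auto.
Qed.

Lemma gam_q_series : exists m, 0 < m /\ is_series (fun k => gam k / q_ p k) m.
Proof.
  destruct E_series_total as [s [Hs _]].
  destruct (tonelli (fun n k => mask n k / q_ p k) Eh s) as [Hcol Hsum].
  { intros; apply Rle_mult_inv_pos. eapply mask_nn, good_all. apply q_pos; auto. }
  { intros n. eapply E_series, good_all. }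
  { auto. }
  assert (Hc : forall k, Series (fun n => mask n k / q_ p k) = if Nat.eqb k i then 0 else gam k / q_ p k).
  { intros k. unfold mask. destruct (Nat.eqb_spec k i).
    - rewrite (Series_ext _ (fun _ => 0)) by (intros; unfold Rdiv; apply Rmult_0_l).
      rewrite (is_series_unique _ 0 is_series_zero). auto.
    - unfold Rdiv. rewrite Series_scal_r. f_equal. unfold gam. destruct (Nat.eqb_spec k i); [lia|]. auto. }
  assert (H2 := is_series_modify _ _ i (/ q_ p i) Hsum).
  assert (Hs0 : 0 <= s).
  { apply (series_nonneg Eh); auto. intros; eapply E_nn, good_all. }
  exists (s + / q_ p i). split. assert (0 < / q_ p i) by (apply Rinv_0_lt_compat, q_pos; auto). lra.
  eapply is_series_extR.
  replace (s + / q_ p i) with (s - Series (fun n => mask n i / q_ p i) + / q_ p i). apply H2.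
  rewrite Hc, Nat.eqb_refl. ring.
  intros k. simpl. rewrite Hc. unfold gam. destruct (Nat.eqb_spec k i). subst; unfold Rdiv; ring. auto.
Qed.

Lemma exists_stationary : exists pi, stationary (qbar p) pi.
Proof.
  destruct gam_q_series as [m [Hm Hms]].
  exists (fun k => gam k / q_ p k / m). split; [|split].
  - intros j. apply Rle_mult_inv_pos; auto. apply Rle_mult_inv_pos. apply gam_nn. apply q_pos; auto.
  - apply psum_series. eapply is_series_extR. replace 1 with (/ m * m) by (field; lra).
    apply is_series_R_scal. apply Hms. intros; simpl. unfold Rdiv; ring.
  - intros k. apply psum_series. rewrite qout_eq.
    eapply is_series_extR. 
    replace (gam k / q_ p k / m * q_ p k) with (/ m * gam k).
    apply is_series_R_scal. apply gam_balance.
    assert (Hq := q_pos p hp0 hp1 k). field; lra.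
    intros j. simpl. rewrite Pi_eq by auto. destruct (Nat.eqb_spec j k), (Nat.eqb_spec j k); try lia; subst.
    ring. assert (Hq := q_pos p hp0 hp1 j). field; lra.
Qed.

End PosRec.


Lemma sum_n_extend (a : nat -> R) A B : (forall k, (A < k)%nat -> a k = 0) -> (A <= B)%nat -> sum_n a A = sum_n a B.
Proof.
  intros H HAB. induction HAB. auto. rewrite sum_Sn, <- IHHAB, H by lia. unfold plus; simpl. req; lra.
Qed.

Lemma series_tail_nonpos (a : nat -> R) N : is_series a 0 -> (forall j, (N < j)%nat -> a j <= 0) -> 0 <= sum_n a N.
Proof.
  intros Hs Ht. 
  assert (Hc := is_lim_seq_le (sum_n a) (fun n => if Nat.leb n N then sum_n a n else sum_n a N) 0 (sum_n a N)).
  simpl in Hc. apply Hc.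
  - intros n. destruct (Nat.leb_spec n N). lra.
    clear -Ht H. induction H. rewrite sum_Sn. unfold plus; simpl. specialize (Ht (S N) ltac:(lia)). lra.
    rewrite sum_Sn. unfold plus; simpl. specialize (Ht (S m) ltac:(lia)). lra.
  - exact Hs.
  - apply is_lim_seq_spec. exists N. intros n Hn. destruct (Nat.leb_spec n N).
    assert (n = N) by lia. subst. rewrite Rminus_eq_0, Rabs_R0. apply cond_pos.
    rewrite Rminus_eq_0, Rabs_R0. apply cond_pos.
Qed.

Section Moment.
Variable p : R.
Hypothesis hp0 : 0 < p.
Hypothesis hp1 : p < 1.
Notation Q := (qbar p).

Variable pi : nat -> R.
Hypothesis Hst : stationary Q pi.

Lemma pi_nn j : 0 <= pi j.
Proof. apply Hst. Qed.

Lemma pi_partial N : sum_n pi N <= 1.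
Proof.
  destruct Hst as [Hnn [Hs _]]. apply series_psum in Hs; auto. apply series_partial_le; auto.
Qed.

Lemma balance_series k : is_series (fun j => pi j * Q j k) 0.
Proof.
  destruct Hst as [Hnn [_ Hb]]. specialize (Hb k).
  apply series_psum in Hb.
  2: { intros j. destruct (Nat.eqb_spec j k). lra. apply Rmult_le_pos; auto. apply Q_offdiag_nonneg; auto. }
  assert (H := is_series_modify _ _ k (pi k * Q k k) Hb).
  eapply is_series_extR. replace 0 with (pi k * qout Q k - (if Nat.eqb k k then 0 else pi k * Q k k) + pi k * Q k k).
  apply H. rewrite Nat.eqb_refl. unfold qout. ring.
  intros j. simpl. destruct (Nat.eqb_spec j k). subst; auto. auto.
Qed.

Lemma finite_test (g : nat -> R) N : is_series (fun j => pi j * sum_n (fun k => Q j k * g k) N) 0.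
Proof.
  eapply is_series_extR. rewrite <- (sum_n_zero N).
  apply (is_series_sum_n (fun j k => pi j * (Q j k * g k)) (fun _ => 0)).
  intros y _. assert (H := is_series_R_scal (g y) _ _ (balance_series y)). rewrite Rmult_0_r in H.
  refine (is_series_extR _ _ _ H _). intros; simpl; ring.
  intros j; simpl. rewrite <- sum_n_Rscal. auto.
Qed.

Variable F : nat -> R.
Hypothesis HFmono : forall k, F k <= F (S k).

Lemma F_mono k m : (k <= m)%nat -> F k <= F m.
Proof. intros H; induction H. lra. eapply Rle_trans; eauto. Qed.

Definition FN (N : nat) k := F (Nat.min k N).

Lemma D_FN_eq N j : Dq p (FN N) j = sum_n (fun k => Q j k * (FN N k - F N)) N.
Proof.
  rewrite D_is by auto.
  replace (sum_n (fun k => Q j k * FN N k) (S j)) with (sum_n (fun k => Q j k * (FN N k - F N)) (S j)).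
  2: { rewrite (sum_n_ext _ (fun k => Q j k * FN N k - F N * Q j k)) by (intros; req; ring).
       rewrite sum_n_Rminus, sum_n_Rscal, row_sum by auto. req; ring. }
  destruct (Nat.le_ge_cases (S j) N).
  - apply sum_n_extend; auto. intros k Hk. rewrite Q_far by auto. ring.
  - symmetry. apply sum_n_extend; auto. intros k Hk. unfold FN. rewrite Nat.min_r by lia. ring.
Qed.

Lemma D_FN_series N : is_series (fun j => pi j * Dq p (FN N) j) 0.
Proof.
  eapply is_series_extR. apply (finite_test (fun k => FN N k - F N) N).
  intros j; simpl. rewrite D_FN_eq. auto.
Qed.

Lemma D_FN_low N j : (j < N)%nat -> Dq p (FN N) j = Dq p F j.
Proof. intros H. apply D_ext. intros k Hk. unfold FN. rewrite Nat.min_l by lia. auto. Qed.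

Lemma D_FN_high N j : (N <= j)%nat -> Dq p (FN N) j <= 0.
Proof.
  intros H. unfold Dq. rewrite <- (sum_n_zero (S j)). apply sum_n_mono_le. intros k Hk.
  destruct (Nat.eq_dec k j). subst. rewrite Rminus_eq_0. lra.
  assert (FN N k <= FN N j). { unfold FN. rewrite (Nat.min_r j) by lia. apply F_mono. lia. }
  assert (0 <= Q j k) by (apply Q_offdiag_nonneg; auto). nra.
Qed.

Variable K : R.
Variable wv : nat -> R.
Hypothesis HK : 0 <= K.
Hypothesis Hdrift : forall j, Dq p F j <= K - wv j.

Lemma moment_partial N : sum_n (fun j => pi j * wv j) N <= K.
Proof.
  assert (H := series_tail_nonpos _ N (D_FN_series (S N))).
  assert (0 <= sum_n (fun j => pi j * Dq p (FN (S N)) j) N).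
  { apply H. intros j Hj. apply Rmult_le_0_l. apply pi_nn. apply D_FN_high; lia. }
  assert (sum_n (fun j => pi j * Dq p (FN (S N)) j) N <= sum_n (fun j => K * pi j - pi j * wv j) N).
  { apply sum_n_mono_le. intros j Hj. rewrite D_FN_low by lia. specialize (Hdrift j).
    assert (0 <= pi j) by apply pi_nn. nra. }
  rewrite sum_n_Rminus, sum_n_Rscal in H1. assert (Hp := pi_partial N).
  assert (K * sum_n pi N <= K) by (rewrite <- (Rmult_1_r K) at 2; apply Rmult_le_compat_l; auto).
  lra.
Qed.

End Moment.


Lemma tangent_concave (f f' : R -> R) A :
  (forall x, A < x -> derivable_pt_lim f x (f' x)) ->
  (forall x y, A < x -> x <= y -> f' y <= f' x) ->
  forall a x, A < a -> A < x -> f x <= f a + f' a * (x - a).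
Proof.
  intros Hd Hm a x Ha Hx. destruct (Rtotal_order a x) as [H|[H|H]].
  - destruct (MVT_cor2 f f' a x H) as [c [Hc Hc2]]. intros; apply Hd; lra.
    assert (f' c <= f' a) by (apply Hm; lra). nra.
  - subst. lra.
  - destruct (MVT_cor2 f f' x a H) as [c [Hc Hc2]]. intros; apply Hd; lra.
    assert (f' a <= f' c) by (apply Hm; lra). nra.
Qed.

Lemma antimono_deriv (f f' : R -> R) A :
  (forall x, A < x -> derivable_pt_lim f x (f' x)) ->
  (forall x, A < x -> f' x <= 0) ->
  forall x y, A < x -> x <= y -> f y <= f x.
Proof.
  intros Hd Hn x y Hx Hxy. destruct (Rle_lt_or_eq_dec _ _ Hxy). 
  - destruct (MVT_cor2 f f' x y r) as [c [Hc Hc2]]. intros; apply Hd; lra.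
    assert (f' c <= 0) by (apply Hn; lra). nra.
  - subst; lra.
Qed.

Lemma Rpower_pos x s : 0 < Rpower x s.
Proof. unfold Rpower. apply exp_pos. Qed.

Lemma Rpower_1_base s : Rpower 1 s = 1.
Proof. unfold Rpower. rewrite ln_1, Rmult_0_r. apply exp_0. Qed.

Lemma Rpower_antimono c x y : c <= 0 -> 0 < x <= y -> Rpower y c <= Rpower x c.
Proof.
  intros Hc Hxy. replace c with (- (- c)) by ring. rewrite (Rpower_Ropp y (- c)), (Rpower_Ropp x (- c)).
  apply Rinv_le_contravar. apply Rpower_pos. apply Rle_Rpower_l; lra.
Qed.

Lemma Rpower_split x s : 0 < x -> Rpower x s = x * Rpower x (s - 1).
Proof.
  intros Hx. replace s with (1 + (s - 1)) at 1 by ring. rewrite Rpower_plus, Rpower_1; auto.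
Qed.

Lemma pow_tangent s a x : 0 < s <= 1 -> 0 < a -> 0 < x ->
  Rpower x s <= Rpower a s + s * Rpower a (s - 1) * (x - a).
Proof.
  intros Hs Ha Hx.
  apply (tangent_concave (fun x => Rpower x s) (fun x => s * Rpower x (s - 1)) 0); auto.
  - intros y Hy. apply derivable_pt_lim_power; auto.
  - intros y z Hy Hyz. apply Rmult_le_compat_l. lra. apply Rpower_antimono; lra.
Qed.

Lemma pow_subadd s a b : 0 < s <= 1 -> 0 < a -> 0 < b -> Rpower (a + b) s <= Rpower a s + Rpower b s.
Proof.
  intros Hs Ha Hb. rewrite (Rpower_split (a + b)), (Rpower_split a), (Rpower_split b) by lra.
  assert (Rpower (a + b) (s - 1) <= Rpower a (s - 1)) by (apply Rpower_antimono; lra).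
  assert (Rpower (a + b) (s - 1) <= Rpower b (s - 1)) by (apply Rpower_antimono; lra).
  nra.
Qed.

Lemma Rpower_le_1 x s : 0 <= s -> 0 < x <= 1 -> Rpower x s <= 1.
Proof. intros Hs Hx. rewrite <- (Rpower_1_base s). apply Rle_Rpower_l; lra. Qed.

Lemma Rpower_ge_1 x s : 0 <= s -> 1 <= x -> 1 <= Rpower x s.
Proof. intros Hs Hx. rewrite <- (Rpower_1_base s). apply Rle_Rpower_l; lra. Qed.

Lemma Rpower_ln_lower x s : 0 < x -> 1 + s * ln x <= Rpower x s.
Proof. intros Hx. unfold Rpower. apply exp_ineq1_le. Qed.

Lemma Rpower_unbounded s : 0 < s -> forall M, exists Z : nat, forall z : nat, (Z <= z)%nat -> M <= Rpower (INR z + 1) s.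
Proof.
  intros Hs M. destruct (INR_unbounded (exp ((M - 1) / s))) as [Z HZ]. exists Z. intros z Hz.
  assert (HzZ : INR Z <= INR z) by (apply le_INR; auto).
  assert (Hpos : 0 < INR z + 1) by (assert (0 <= INR z) by apply pos_INR; lra).
  eapply Rle_trans. 2: apply Rpower_ln_lower; auto.
  assert ((M - 1) / s <= ln (INR z + 1)).
  { rewrite <- (ln_exp ((M - 1) / s)). apply ln_le. apply exp_pos. lra. }
  assert (M - 1 <= s * ln (INR z + 1)).
  { apply (Rmult_le_reg_r (/ s)). apply Rinv_0_lt_compat; auto.
    replace (s * ln (INR z + 1) * / s) with (ln (INR z + 1)) by (field; lra). auto. }
  lra.
Qed.

Section Jensen.
Variable p : R.
Hypothesis hp0 : 0 < p.
Hypothesis hp1 : p < 1.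

Lemma w_jensen (phi : R -> R) (g : nat -> R) a d j :
  (forall m, (m <= j)%nat -> phi (g m) <= phi a + d * (g m - a)) ->
  sum_n (fun m => w p j m * phi (g m)) j <= phi a + d * (sum_n (fun m => w p j m * g m) j - a).
Proof.
  intros H.
  apply Rle_trans with (sum_n (fun m => (phi a - d * a) * w p j m + d * (w p j m * g m)) j).
  - apply sum_n_mono_le. intros m Hm. specialize (H m Hm). assert (0 <= w p j m) by (apply w_nonneg; lra).
    nra.
  - rewrite sum_n_Rplus, !sum_n_Rscal, w_sum by auto. lra.
Qed.

Lemma w_mean1 j : sum_n (fun m => w p j m * (INR m + 1)) j = INR j * p + 1.
Proof.
  rewrite (sum_n_ext _ (fun m => w p j m * INR m + w p j m)) by (intros; req; ring).
  rewrite sum_n_Rplus, w_mean, w_sum by auto. req; ring.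
Qed.

Definition f1 (s : R) (k : nat) := Rpower (INR k + 1) s.

Lemma f1_ge1 s k : 0 <= s -> 1 <= f1 s k.
Proof. intros. unfold f1. apply Rpower_ge_1; auto. assert (0 <= INR k) by apply pos_INR. lra. Qed.

Lemma f1_mono s k : 0 <= s -> f1 s k <= f1 s (S k).
Proof.
  intros. unfold f1. apply Rle_Rpower_l; auto. rewrite S_INR. assert (0 <= INR k) by apply pos_INR. lra.
Qed.

Lemma drift_f1 s j : 0 < s <= 1 ->
  Dq p (f1 s) j <= p * ((s + Rpower p s - 1) * f1 s j + s + 1).
Proof.
  intros Hs. rewrite D_formula.
  set (X := INR j + 1).
  assert (HX : 1 <= X) by (unfold X; assert (0 <= INR j) by apply pos_INR; lra).
  assert (Hup : f1 s (S j) - f1 s j <= s * Rpower X (s - 1)).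
  { unfold f1. rewrite S_INR. fold X. 
    assert (H := pow_tangent s X (X + 1) Hs ltac:(lra) ltac:(lra)). lra. }
  assert (HX1 : Rpower X (s - 1) <= 1).
  { rewrite <- (Rpower_1_base (s - 1)) at 2. apply Rpower_antimono; lra. }
  assert (HXs : X * Rpower X (s - 1) = f1 s j) by (unfold f1; fold X; rewrite <- Rpower_split; lra).
  assert (Hup2 : INR (j + 2) * p * (f1 s (S j) - f1 s j) <= p * (s * f1 s j + s)).
  { replace (INR (j + 2)) with (X + 1) by (unfold X; rewrite plus_INR; simpl; ring).
    assert (0 <= Rpower X (s - 1)) by (left; apply Rpower_pos).
    apply Rle_trans with ((X + 1) * p * (s * Rpower X (s - 1))).
    apply Rmult_le_compat_l. apply Rmult_le_pos; lra. auto.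
    rewrite <- HXs. assert (0 <= p * s * (1 - Rpower X (s - 1))).
    { apply Rmult_le_pos; [apply Rmult_le_pos|]; lra. }
    nra. }
  assert (Hdn : sum_n (fun m => w p j m * (f1 s m - f1 s j)) j <= Rpower p s * f1 s j + 1 - f1 s j).
  { rewrite (sum_n_ext _ (fun m => w p j m * f1 s m - f1 s j * w p j m)) by (intros; req; ring).
    rewrite sum_n_Rminus, sum_n_Rscal, w_sum by auto.
    assert (HJ : sum_n (fun m => w p j m * f1 s m) j <= Rpower (INR j * p + 1) s).
    { unfold f1. 
      assert (H := w_jensen (fun x => Rpower x s) (fun m => INR m + 1) (INR j * p + 1) (s * Rpower (INR j * p + 1) (s - 1)) j).
      rewrite w_mean1 in H. rewrite Rminus_eq_0, Rmult_0_r, Rplus_0_r in H. apply H.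
      intros m _. apply pow_tangent; auto. assert (0 <= INR j) by apply pos_INR. nra.
      assert (0 <= INR m) by apply pos_INR. lra. }
    assert (HS : Rpower (INR j * p + 1) s <= Rpower p s * f1 s j + 1).
    { replace (INR j * p + 1) with (p * X + (1 - p)) by (unfold X; ring).
      eapply Rle_trans. apply pow_subadd; auto. nra. lra.
      rewrite <- Rpower_mult_distr by lra. unfold f1; fold X.
      assert (Rpower (1 - p) s <= 1) by (apply Rpower_le_1; lra). lra. }
    lra. }
  nra.
Qed.

End Jensen.


Section Part1.
Variable p : R.
Hypothesis hp0 : 0 < p.
Hypothesis hp1 : p < 1.
Notation Q := (qbar p).

Lemma C_pos n k : (k <= n)%nat -> 0 < Binomial.C n k.
Proof.
  intros. unfold Binomial.C. apply Rdiv_lt_0_compat. apply INR_fact_lt_0.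
  apply Rmult_lt_0_compat; apply INR_fact_lt_0.
Qed.

Lemma irred : irreducible Q.
Proof.
  intros i k. destruct (Nat.le_gt_cases i k).
  - induction H. apply rt_refl. eapply rt_trans. apply IHle. apply rt_step. split. lia.
    rewrite Q_up by auto. apply Rmult_lt_0_compat; auto. apply lt_0_INR; lia.
  - apply rt_step. split. lia. rewrite Q_lt by auto. apply Rmult_lt_0_compat; auto.
    unfold w. apply Rmult_lt_0_compat. apply Rmult_lt_0_compat. apply C_pos; lia.
    apply pow_lt; auto. apply pow_lt; lra.
Qed.

Definition U (i z : nat) : R := INR (i - z).
Definition Ind (i z : nat) : R := if Nat.ltb i z then 1 else 0.

Lemma DU_low i z : (z < i)%nat -> Dq p (U i) z <= - 2 * p.
Proof.
  intros Hz. rewrite D_formula by auto.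
  assert (H1 : U i (S z) - U i z = -1).
  { unfold U. replace (i - z)%nat with (S (i - S z)) by lia. rewrite S_INR. ring. }
  rewrite H1.
  rewrite (sum_n_ext_le _ (fun m => INR z * w p z m - w p z m * INR m)).
  2: { intros m Hm. unfold U. rewrite !minus_INR by lia. ring. }
  rewrite sum_n_Rminus, sum_n_Rscal, w_sum, w_mean by auto.
  rewrite plus_INR. simpl INR. assert (0 <= INR z) by apply pos_INR. nra.
Qed.

Lemma DU_high i z : (i <= z)%nat -> Dq p (U i) z <= p * INR i.
Proof.
  intros Hz. rewrite D_formula by auto.
  assert (H1 : U i (S z) - U i z = 0).
  { unfold U. replace (i - z)%nat with 0%nat by lia. replace (i - S z)%nat with 0%nat by lia. ring. }
  rewrite H1, Rmult_0_r, Rplus_0_l. apply Rmult_le_compat_l. lra.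
  rewrite <- (Rmult_1_r (INR i)), <- (w_sum p z), <- sum_n_Rscal.
  apply sum_n_mono_le. intros m Hm. unfold U. replace (i - z)%nat with 0%nat by lia.
  assert (INR (i - m) <= INR i) by (apply le_INR; lia). assert (0 <= w p z m) by (apply w_nonneg; lra).
  simpl INR. nra.
Qed.

Lemma DU_all i z : Dq p (U i) z <= p * INR i.
Proof.
  destruct (Nat.lt_ge_cases z i). assert (H0 := DU_low i z H). assert (0 <= INR i) by apply pos_INR. nra.
  apply DU_high; auto.
Qed.

Lemma DInd_low i z : (z < i)%nat -> Dq p (Ind i) z = 0.
Proof.
  intros Hz. rewrite D_formula by auto. unfold Ind.
  destruct (Nat.ltb_spec i (S z)); [lia|]. destruct (Nat.ltb_spec i z); [lia|].
  rewrite (sum_n_ext_le _ (fun _ => 0)). rewrite sum_n_zero. ring.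
  intros m Hm. destruct (Nat.ltb_spec i m); [lia|]. ring.
Qed.

Lemma DInd_high i z : (i < z)%nat -> Dq p (Ind i) z <= - p * (1 - p) ^ z.
Proof.
  intros Hz. rewrite D_formula by auto.
  assert (E1 : Ind i (S z) = 1) by (unfold Ind; destruct (Nat.ltb_spec i (S z)); [auto|lia]).
  assert (E2 : Ind i z = 1) by (unfold Ind; destruct (Nat.ltb_spec i z); [auto|lia]).
  assert (E3 : Ind i 0 = 0) by (unfold Ind; destruct (Nat.ltb_spec i 0); [lia|auto]).
  rewrite E1, E2, Rminus_eq_0, Rmult_0_r, Rplus_0_l.
  destruct z as [|z]; [lia|]. rewrite sum_n_shift, E3, w_j0.
  assert (sum_n (fun k => w p (S z) (S k) * (Ind i (S k) - 1)) z <= 0).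
  { rewrite <- (sum_n_zero z). apply sum_n_mono_le. intros m _. unfold Ind.
    assert (0 <= w p (S z) (S m)) by (apply w_nonneg; lra). destruct (Nat.ltb i (S m)); nra. }
  nra.
Qed.

Lemma DInd_nonpos i z : (i < z)%nat -> Dq p (Ind i) z <= 0.
Proof. intros H. eapply Rle_trans. apply DInd_high; auto. assert (0 <= (1 - p) ^ z) by (apply pow_le; lra). nra. Qed.

Variable s : R.
Hypothesis hs0 : 0 < s.
Hypothesis hgs : s + Rpower p s - 1 < 0.

Lemma hs1 : s <= 1.
Proof. assert (H := Rpower_pos p s). lra. Qed.

Lemma pow_decr (x : R) m n : 0 <= x <= 1 -> (m <= n)%nat -> x ^ n <= x ^ m.
Proof.
  intros Hx H. induction H. lra. simpl. eapply Rle_trans. 2: apply IHle.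
  assert (0 <= x ^ m0) by (apply pow_le; lra). nra.
Qed.

Lemma lyapunov i : exists V : nat -> R, (forall z, 0 <= V z) /\ (forall z, z <> i -> Dq p V z <= -1) /\
  (forall M, exists Z, forall z, (Z <= z)%nat -> M <= V z).
Proof.
  set (gs := s + Rpower p s - 1). set (K := s + 1).
  assert (Hdf : forall z, Dq p (f1 s) z <= p * (gs * f1 s z + K)).
  { intros z. unfold gs, K. assert (H := drift_f1 p hp0 hp1 s z (conj hs0 hs1)). lra. }
  set (a := (p * K + 1) / (2 * p)).
  set (B := a * p * INR i + p * K + 1).
  assert (Ha : 0 <= a). { unfold a, K. apply Rle_mult_inv_pos. nra. lra. }
  assert (HB : 0 < B). { unfold B, K. assert (0 <= INR i) by apply pos_INR. assert (0 <= a * p * INR i).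
    apply Rmult_le_pos; [apply Rmult_le_pos|]; lra. nra. }
  destruct (Rpower_unbounded s hs0 (B / (p * - gs))) as [Z HZ].
  set (c := B / (p * (1 - p) ^ Z)).
  assert (Hc : 0 <= c). { unfold c. apply Rle_mult_inv_pos. lra. apply Rmult_lt_0_compat; auto. apply pow_lt; lra. }
  exists (fun k => a * U i k + (f1 s k + c * Ind i k)). split; [|split].
  - intros z. assert (0 <= U i z) by apply pos_INR. assert (1 <= f1 s z) by (apply f1_ge1; lra).
    assert (0 <= Ind i z) by (unfold Ind; destruct (Nat.ltb i z); lra). nra.
  - intros z Hz. rewrite D_plus, D_scal, D_plus, D_scal by auto.
    assert (Hf := Hdf z). assert (1 <= f1 s z) by (apply f1_ge1; lra).
    assert (gs * f1 s z <= 0) by (unfold gs in *; nra).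
    destruct (Nat.lt_ge_cases z i) as [Hzi|Hzi].
    + assert (H1 := DU_low i z Hzi). rewrite DInd_low by auto.
      assert (a * Dq p (U i) z <= a * (- 2 * p)) by (apply Rmult_le_compat_l; auto).
      assert (a * (- 2 * p) = - (p * K + 1)) by (unfold a; field; lra). nra.
    + assert (Hiz : (i < z)%nat) by lia.
      assert (H1 := DU_high i z Hzi). 
      assert (a * Dq p (U i) z <= a * (p * INR i)) by (apply Rmult_le_compat_l; auto).
      destruct (Nat.lt_ge_cases z Z) as [HzZ|HzZ].
      * assert (HI2 := DInd_high i z Hiz).
        assert ((1 - p) ^ Z <= (1 - p) ^ z) by (apply pow_decr; lia || lra).
        assert (c * Dq p (Ind i) z <= c * (- p * (1 - p) ^ z)) by (apply Rmult_le_compat_l; auto).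
        assert (c * (- p * (1 - p) ^ z) <= c * (- p * (1 - p) ^ Z)) by (apply Rmult_le_compat_l; auto; nra).
        assert (c * (- p * (1 - p) ^ Z) = - B).
        { unfold c. assert (0 < (1 - p) ^ Z) by (apply pow_lt; lra). field. lra. }
        unfold B in *. nra.
      * assert (HI2 := DInd_nonpos i z Hiz).
        assert (c * Dq p (Ind i) z <= 0) by (apply Rmult_le_0_l; auto).
        assert (Hf1 := HZ z HzZ). fold (f1 s z) in Hf1.
        assert (p * gs * f1 s z <= - B).
        { assert (0 < p * - gs) by (unfold gs in *; nra).
          apply (Rmult_le_compat_l (p * - gs)) in Hf1; [|lra].
          replace (p * - gs * (B / (p * - gs))) with B in Hf1 by (field; repeat split; unfold gs in *; lra). nra. }
        unfold B in *. nra.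
  - intros M. destruct (Rpower_unbounded s hs0 M) as [Z2 HZ2]. exists Z2. intros z Hz.
    specialize (HZ2 z Hz). fold (f1 s z) in HZ2.
    assert (0 <= U i z) by apply pos_INR. assert (0 <= Ind i z) by (unfold Ind; destruct (Nat.ltb i z); lra).
    nra.
Qed.

Lemma posrec : positive_recurrent Q.
Proof.
  split. apply irred. intros i. destruct (lyapunov i) as [V [H1 [H2 H3]]].
  apply (pos_rec p hp0 hp1 i V); auto.
Qed.

Lemma stat_exists : exists pi, stationary Q pi.
Proof.
  destruct (lyapunov 0) as [V [H1 [H2 H3]]]. apply (exists_stationary p hp0 hp1 0 V); auto.
Qed.

Lemma moment_finite pi : stationary Q pi -> Rbar_lt (moment pi s) p_infty.
Proof.
  intros Hst. set (gs := s + Rpower p s - 1). set (K := s + 1).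
  assert (Hdf : forall z, Dq p (f1 s) z <= p * K - (p * - gs * f1 s z)).
  { intros z. unfold gs, K. assert (H := drift_f1 p hp0 hp1 s z (conj hs0 hs1)). lra. }
  assert (Hmp := moment_partial p hp0 hp1 pi Hst (f1 s) (fun k => f1_mono s k (Rlt_le _ _ hs0)) (p * K) _
     ltac:(unfold K; nra) Hdf).
  unfold moment. apply (psum_lt_bounded _ (p * K / (p * - gs))).
  - intros k. apply Rmult_le_pos. apply (pi_nn p pi Hst). left; apply Rpower_pos.
  - intros N. specialize (Hmp N). assert (Hg : 0 < p * - gs) by (unfold gs in *; nra).
    rewrite (sum_n_ext _ (fun j => / (p * - gs) * (pi j * (p * - gs * f1 s j)))).
    2: { intros j. unfold f1. rewrite S_INR. req. field. repeat split; unfold gs in *; lra. }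
    rewrite sum_n_Rscal. apply (Rmult_le_reg_l (p * - gs)); auto.
    rewrite <- Rmult_assoc, Rinv_r, Rmult_1_l by lra.
    replace (p * - gs * (p * K / (p * - gs))) with (p * K) by (field; repeat split; unfold gs in *; lra). exact Hmp.
Qed.
End Part1.


Lemma ln_le_x1 x : 0 < x -> ln x <= x - 1.
Proof. intros Hx. assert (H := exp_ineq1_le (ln x)). rewrite exp_ln in H; auto. lra. Qed.

Lemma inv_pow_tangent b t u : 0 < b -> 0 < t -> 0 < u ->
  Rpower u (- b) <= Rpower t (- b) + b * Rpower u (- b - 1) * (t - u).
Proof.
  intros Hb Ht Hu.
  assert (E1 : Rpower t (- b) = Rpower u (- b) * exp (- b * (ln t - ln u))).
  { unfold Rpower. rewrite <- exp_plus. f_equal. ring. }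
  assert (E2 : Rpower u (- b) = u * Rpower u (- b - 1)) by (apply Rpower_split; auto).
  assert (H1 := exp_ineq1_le (- b * (ln t - ln u))).
  assert (H2 : ln t - ln u <= t / u - 1).
  { rewrite <- ln_div by auto. apply ln_le_x1. apply Rdiv_lt_0_compat; auto. }
  assert (Hp := Rpower_pos u (- b)). assert (Hp1 := Rpower_pos u (- b - 1)).
  rewrite E1.
  assert (Rpower u (- b) * (1 + - b * (ln t - ln u)) <= Rpower u (- b) * exp (- b * (ln t - ln u))).
  { apply Rmult_le_compat_l; lra. }
  assert (- b * (t / u - 1) <= - b * (ln t - ln u)) by nra.
  assert (Rpower u (- b) * (1 + - b * (t / u - 1)) <= Rpower u (- b) * (1 + - b * (ln t - ln u))).
  { apply Rmult_le_compat_l; lra. }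
  assert (Rpower u (- b) * (1 + - b * (t / u - 1)) = Rpower u (- b) - b * Rpower u (- b - 1) * (t - u)).
  { rewrite E2. field. lra. }
  lra.
Qed.

Lemma der_power_comp (g : R -> R) x dg b : 0 < g x -> is_derive g x dg ->
  is_derive (fun y => Rpower (g y) b) x (dg * (b * Rpower (g x) (b - 1))).
Proof.
  intros Hg Hd. apply (is_derive_comp (fun t => Rpower t b) g x). 
  apply is_derive_Reals. apply derivable_pt_lim_power; auto. auto.
Qed.

Section Part2.
Variable q r c : R.
Hypothesis hq0 : 0 < q.
Hypothesis hr : 0 < r.
Hypothesis hc : (r + 1) / q + 1 <= c.

Definition psi (t : R) := Rpower t (- r) - (r / q) * Rpower t (- r - 1).
Definition lf (y : R) := ln y / q + c.
Definition G (y : R) := y * Rpower (lf y) (- r).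
Definition Gd (y : R) := psi (lf y).

Lemma lf_gt y : exp (- q) < y -> (r + 1) / q < lf y.
Proof.
  intros Hy. unfold lf. assert (0 < y) by (eapply Rlt_trans; [apply exp_pos|eauto]).
  assert (- q < ln y). { rewrite <- (ln_exp (- q)). apply ln_increasing; auto. apply exp_pos. }
  assert (-1 < ln y / q). { apply (Rmult_lt_reg_r q); auto. unfold Rdiv. rewrite Rmult_assoc, Rinv_l; lra. }
  lra.
Qed.

Lemma rq_pos : 0 < (r + 1) / q.
Proof. apply Rdiv_lt_0_compat; lra. Qed.

Lemma G_deriv y : exp (- q) < y -> derivable_pt_lim G y (Gd y).
Proof.
  intros Hy. assert (Hy0 : 0 < y) by (eapply Rlt_trans; [apply exp_pos|eauto]).
  assert (Hl := lf_gt y Hy). assert (Hrq := rq_pos).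
  apply is_derive_Reals.
  assert (Hlf : is_derive lf y (/ y * / q)).
  { unfold lf. eapply is_derive_ext. intros t. reflexivity.
    assert (H := is_derive_plus (fun t => / q * ln t) (fun _ => c) y (/ q * / y) zero
              (is_derive_scal ln y (/ q) (/ y) (is_derive_ln y Hy0)) (is_derive_const c y)).
    eapply is_derive_ext. 2: { replace (/ y * / q) with (plus (/ q * / y) zero). apply H.
      unfold plus, zero; simpl. ring. }
    intros t. simpl. unfold plus; simpl. unfold Rdiv; ring. }
  assert (Hpw := der_power_comp lf y _ (- r) ltac:(lra) Hlf).
  assert (Hm := is_derive_mult (fun t => t) (fun t => Rpower (lf t) (- r)) y one _ (is_derive_id y) Hpw
                 ltac:(intros; apply Rmult_comm)).
  unfold G. eapply is_derive_ext. 2: { 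
    replace (Gd y) with (plus (mult one (Rpower (lf y) (- r))) (mult y (/ y * / q * (- r * Rpower (lf y) (- r - 1))))).
    apply Hm.
    unfold Gd, psi, plus, mult, one; simpl. field. split; lra. }
  intros t. reflexivity.
Qed.

Lemma psi_deriv t : 0 < t -> derivable_pt_lim psi t (Rpower t (- r - 2) * r * ((r + 1) / q - t)).
Proof.
  intros Ht. unfold psi.
  replace (Rpower t (- r - 2) * r * ((r + 1) / q - t)) with
    (- r * Rpower t (- r - 1) - (r / q) * ((- r - 1) * Rpower t (- r - 1 - 1))).
  - apply derivable_pt_lim_minus. apply derivable_pt_lim_power; auto.
    apply derivable_pt_lim_scal. apply derivable_pt_lim_power; auto.
  - replace (- r - 1 - 1) with (- r - 2) by ring.
    rewrite (Rpower_split t (- r - 1)) by auto. replace (- r - 1 - 1) with (- r - 2) by ring. field. lra.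
Qed.

Lemma psi_mono t1 t2 : (r + 1) / q < t1 -> t1 <= t2 -> psi t2 <= psi t1.
Proof.
  intros H1 H12. assert (Hrq := rq_pos).
  apply (antimono_deriv psi (fun t => Rpower t (- r - 2) * r * ((r + 1) / q - t)) ((r + 1) / q)); auto.
  - intros x Hx. apply psi_deriv. lra.
  - intros x Hx. assert (Hp := Rpower_pos x (- r - 2)). assert (0 < Rpower x (- r - 2) * r) by nra. nra.
Qed.

Lemma psi_nonneg t : (r + 1) / q < t -> 0 <= psi t.
Proof.
  intros H. assert (Hrq := rq_pos). unfold psi. rewrite (Rpower_split t (- r)) by lra.
  replace (- r - 1) with (- r - 1) by ring.
  assert (Hp := Rpower_pos t (- r - 1)).
  assert (r / q < t). { apply Rlt_trans with ((r + 1) / q); auto. unfold Rdiv. apply Rmult_lt_compat_r.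
    apply Rinv_0_lt_compat; auto. lra. }
  nra.
Qed.

Lemma lf_mono y1 y2 : 0 < y1 -> y1 <= y2 -> lf y1 <= lf y2.
Proof.
  intros H1 H12. unfold lf. assert (ln y1 <= ln y2) by (apply ln_le; auto).
  unfold Rdiv. assert (0 < / q) by (apply Rinv_0_lt_compat; auto). nra.
Qed.

Lemma G_tangent a y : exp (- q) < a -> exp (- q) < y -> G y <= G a + Gd a * (y - a).
Proof.
  apply (tangent_concave G Gd (exp (- q))).
  - apply G_deriv.
  - intros x z Hx Hxz. unfold Gd. apply psi_mono. apply lf_gt; auto.
    apply lf_mono; auto. eapply Rlt_trans; [apply exp_pos|eauto].
Qed.

Lemma Gd_nonneg y : exp (- q) < y -> 0 <= Gd y.
Proof. intros; apply psi_nonneg; apply lf_gt; auto. Qed.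

Lemma G_mono a b : exp (- q) < a -> a <= b -> G a <= G b.
Proof.
  intros Ha Hab. assert (H := G_tangent b a ltac:(lra) Ha). assert (Hd := Gd_nonneg b ltac:(lra)). nra.
Qed.

End Part2.


Section Drift2.
Variable p : R.
Hypothesis hp0 : 0 < p.
Hypothesis hp1 : p < 1.

Lemma jensen_pow s j : 0 < s <= 1 ->
  sum_n (fun m => w p j m * Rpower (INR m + 1) s) j <= Rpower (INR j * p + 1) s.
Proof.
  intros Hs.
  assert (H := w_jensen p hp0 hp1 (fun x => Rpower x s) (fun m => INR m + 1) (INR j * p + 1) (s * Rpower (INR j * p + 1) (s - 1)) j).
  rewrite w_mean1 in H by auto. rewrite Rminus_eq_0, Rmult_0_r, Rplus_0_r in H. apply H.
  intros m _. apply pow_tangent; auto. assert (0 <= INR j) by apply pos_INR. nra.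
  assert (0 <= INR m) by apply pos_INR. lra.
Qed.

Lemma mean_pow_bound s j : 0 < s <= 1 ->
  Rpower (INR j * p + 1) s <= Rpower p s * Rpower (INR j + 1) s + 1.
Proof.
  intros Hs. assert (0 <= INR j) by apply pos_INR.
  replace (INR j * p + 1) with (p * (INR j + 1) + (1 - p)) by ring.
  eapply Rle_trans. apply pow_subadd; auto. nra. lra.
  rewrite <- Rpower_mult_distr by lra.
  assert (Rpower (1 - p) s <= 1) by (apply Rpower_le_1; lra). lra.
Qed.

Variable q r c : R.
Hypothesis hq0 : 0 < q.
Hypothesis hq1 : q < 1.
Hypothesis hpq : Rpower p q = 1 - q.
Hypothesis hr : 0 < r.

Definition a_ := - ln p.
Definition kap := 1 - (1 - q) * a_.
Definition C2 := Rpower (/ 2) (- r - 2).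
Definition C3 := r * (r + 1) * a_ ^ 2 * C2.

Hypothesis hc1 : (r + 1) / q + 1 <= c.
Hypothesis hc2 : 2 * a_ <= c.
Hypothesis hc3 : a_ + 1 <= c.
Hypothesis hc4 : (1 - q) * C3 <= r * kap / 2 * c.

Lemma a_pos : 0 < a_.
Proof. unfold a_. assert (ln p < 0) by (rewrite <- ln_1; apply ln_increasing; lra). lra. Qed.

Lemma c_ge1 : 1 <= c.
Proof. assert (H := a_pos). lra. Qed.

Definition f2 (k : nat) := G q r c (Rpower (INR k + 1) q).

Lemma lf_pow X : 0 < X -> lf q c (Rpower X q) = ln X + c.
Proof. intros. unfold lf. rewrite ln_Rpower. field. lra. Qed.

Lemma f2_eq k : f2 k = Rpower (INR k + 1) q * Rpower (ln (INR k + 1) + c) (- r).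
Proof.
  unfold f2, G. rewrite lf_pow; auto. assert (0 <= INR k) by apply pos_INR. lra.
Qed.

Lemma expq_lt1 : exp (- q) < 1.
Proof. rewrite <- exp_0. apply exp_increasing. lra. Qed.

Lemma pow_ge1 X s : 1 <= X -> 0 <= s -> 1 <= Rpower X s.
Proof. intros. apply Rpower_ge_1; auto. Qed.

Lemma f2_mono k : f2 k <= f2 (S k).
Proof.
  unfold f2. apply G_mono; auto. 
  assert (0 <= INR k) by apply pos_INR. assert (1 <= Rpower (INR k + 1) q) by (apply pow_ge1; lra).
  assert (Hq1 := expq_lt1). lra.
  rewrite S_INR. apply Rle_Rpower_l. lra. assert (0 <= INR k) by apply pos_INR. lra.
Qed.

Lemma f2_nonneg k : 0 <= f2 k.
Proof.
  rewrite f2_eq. left. apply Rmult_lt_0_compat; apply Rpower_pos.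
Qed.

Lemma kap_pos : 0 < kap.
Proof.
  unfold kap, a_.
  assert (Hl : q * ln p = ln (1 - q)). { rewrite <- hpq. unfold Rpower. rewrite ln_exp. auto. }
  set (x := q / (1 - q)).
  assert (Hx : 0 < x) by (unfold x; apply Rdiv_lt_0_compat; lra).
  assert (H1 := exp_ineq1 x ltac:(lra)).
  assert (Hx1 : 1 + x = / (1 - q)) by (unfold x; field; lra).
  assert (H2 : ln (/ (1 - q)) < x).
  { rewrite <- (ln_exp x). apply ln_increasing. apply Rinv_0_lt_compat; lra. lra. }
  rewrite ln_Rinv in H2 by lra.
  assert (H3 : (1 - q) * (- ln (1 - q)) < q).
  { apply (Rmult_lt_compat_l (1 - q)) in H2; [|lra]. unfold x in H2.
    replace ((1 - q) * (q / (1 - q))) with q in H2 by (field; lra). lra. }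
  assert (H4 : q * ((1 - q) * - ln p) = (1 - q) * - ln (1 - q)) by (rewrite <- Hl; ring).
  assert (H5 : (1 - q) * - ln p < 1).
  { apply (Rmult_lt_reg_l q); auto. lra. }
  lra.
Qed.

Lemma up_bound j :
  let X := INR j + 1 in let l := ln X + c in
  INR (j + 2) * p * (f2 (S j) - f2 j) <=
  p * q * Rpower X q * Rpower l (- r) - p * r * Rpower X q * Rpower l (- r - 1) + p * q.
Proof.
  intros X l.
  assert (HX : 1 <= X) by (unfold X; assert (0 <= INR j) by apply pos_INR; lra).
  assert (HlnX : 0 <= ln X) by (rewrite <- ln_1; apply ln_le; lra).
  assert (Hl : c <= l) by (unfold l; lra).
  assert (Hc1 := c_ge1).
  assert (Hrq : (r + 1) / q < l) by lra.
  assert (He := expq_lt1).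
  set (Xq := Rpower X q).
  assert (HXq : 1 <= Xq) by (apply pow_ge1; lra).
  assert (HX1q : 1 <= Rpower (X + 1) q) by (apply pow_ge1; lra).
  assert (Ht := G_tangent q r c hq0 hr hc1 Xq (Rpower (X + 1) q) ltac:(lra) ltac:(lra)).
  assert (Ef1 : f2 (S j) = G q r c (Rpower (X + 1) q)) by (unfold f2, X; rewrite S_INR; auto).
  assert (Ef0 : f2 j = G q r c Xq) by (unfold f2, Xq, X; auto).
  assert (EGd : Gd q r c Xq = psi q r l) by (unfold Gd, Xq, l; rewrite lf_pow; auto; lra).
  assert (Hpsi0 := psi_nonneg q r hq0 hr l Hrq).
  set (L0 := Rpower l (- r)). set (L1 := Rpower l (- r - 1)).
  assert (Epsi : psi q r l = L0 - r / q * L1) by auto.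
  assert (HL0 : L0 <= 1) by (unfold L0; rewrite <- (Rpower_1_base (- r)); apply Rpower_antimono; lra).
  assert (HL1 : 0 < L1) by apply Rpower_pos.
  assert (Hpsi1 : psi q r l <= 1).
  { rewrite Epsi. assert (0 <= r / q * L1). apply Rmult_le_pos; [left; apply Rdiv_lt_0_compat|]; lra. lra. }
  assert (Hpt := pow_tangent q X (X + 1) ltac:(lra) ltac:(lra) ltac:(lra)).
  fold Xq in Hpt. replace (X + 1 - X) with 1 in Hpt by ring.
  set (Xm := Rpower X (q - 1)) in *.
  assert (HXm : 0 < Xm) by apply Rpower_pos.
  assert (HXm1 : Xm <= 1) by (unfold Xm; rewrite <- (Rpower_1_base (q - 1)) at 2; apply Rpower_antimono; lra).
  assert (EXm : X * Xm = Xq) by (unfold Xm, Xq; rewrite <- Rpower_split; lra).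
  replace (INR (j + 2)) with (X + 1) by (unfold X; rewrite plus_INR; simpl; ring).
  rewrite Ef1, Ef0.
  assert (Hd : G q r c (Rpower (X + 1) q) - G q r c Xq <= psi q r l * (q * Xm)).
  { rewrite EGd in Ht. assert (psi q r l * (Rpower (X + 1) q - Xq) <= psi q r l * (q * Xm * 1)).
    apply Rmult_le_compat_l; lra. lra. }
  apply Rle_trans with ((X + 1) * p * (psi q r l * (q * Xm))).
  apply Rmult_le_compat_l. nra. auto.
  replace ((X + 1) * p * (psi q r l * (q * Xm))) with (p * q * psi q r l * (X * Xm) + p * q * psi q r l * Xm) by ring.
  rewrite EXm.
  assert (p * q * psi q r l * Xm <= p * q).
  { assert (0 <= p * q) by nra. assert (psi q r l * Xm <= 1) by nra. nra. }
  rewrite Epsi.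
  replace (p * q * (L0 - r / q * L1) * Xq) with (p * q * Xq * L0 - p * r * Xq * L1) by (field; lra).
  rewrite Epsi in H. lra.
Qed.

Lemma down_bound j :
  let X := INR j + 1 in let l := ln X + c in
  sum_n (fun m => w p j m * (f2 m - f2 j)) j <=
  (1 - q) * Rpower X q * (Rpower l (- r) + r * a_ * Rpower l (- r - 1) + C3 * Rpower l (- r - 2)) + 1
   - Rpower X q * Rpower l (- r).
Proof.
  intros X l.
  assert (HX : 1 <= X) by (unfold X; assert (0 <= INR j) by apply pos_INR; lra).
  assert (HlnX : 0 <= ln X) by (rewrite <- ln_1; apply ln_le; lra).
  assert (Hl : c <= l) by (unfold l; lra).
  assert (Hc1 := c_ge1). assert (Ha := a_pos).
  assert (He := expq_lt1).
  set (Xq := Rpower X q).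
  assert (HXq : 1 <= Xq) by (apply pow_ge1; lra).
  rewrite (sum_n_ext _ (fun m => w p j m * f2 m - f2 j * w p j m)) by (intros; req; ring).
  rewrite sum_n_Rminus, sum_n_Rscal, w_sum, Rmult_1_r.
  assert (Ef : f2 j = Xq * Rpower l (- r)) by (rewrite f2_eq; auto).
  set (Y := fun m => Rpower (INR m + 1) q).
  set (A := sum_n (fun m => w p j m * Y m) j).
  assert (HY1 : forall m, 1 <= Y m).
  { intros m. unfold Y. apply pow_ge1; [|lra]. assert (0 <= INR m) by apply pos_INR. lra. }
  assert (HA1 : 1 <= A).
  { unfold A. rewrite <- (w_sum p j). apply sum_n_mono_le. intros m _.
    assert (0 <= w p j m) by (apply w_nonneg; lra). specialize (HY1 m). nra. }
  assert (HJ : sum_n (fun m => w p j m * f2 m) j <= G q r c A).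
  { assert (H := w_jensen p hp0 hp1 (G q r c) Y A (Gd q r c A) j).
    fold A in H. rewrite Rminus_eq_0, Rmult_0_r, Rplus_0_r in H. apply H.
    intros m _. apply G_tangent; auto; specialize (HY1 m); lra. }
  set (Z := INR j * p + 1).
  assert (HZ : 1 <= Z) by (unfold Z; assert (0 <= INR j) by apply pos_INR; nra).
  assert (HAB : A <= Rpower Z q) by (apply jensen_pow; lra).
  assert (HG : G q r c A <= G q r c (Rpower Z q)) by (apply G_mono; auto; lra).
  assert (EGZ : G q r c (Rpower Z q) = Rpower Z q * Rpower (ln Z + c) (- r)).
  { unfold G. rewrite lf_pow; auto. lra. }
  assert (HBq : Rpower Z q <= (1 - q) * Xq + 1).
  { rewrite <- hpq. apply mean_pow_bound; lra. }
  set (u := l - a_).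
  assert (Hu1 : 1 <= u) by (unfold u; lra).
  assert (Hu2 : l / 2 <= u) by (unfold u; lra).
  assert (Hlnz : u <= ln Z + c).
  { unfold u, l, a_. assert (ln (p * X) <= ln Z).
    { apply ln_le. nra. unfold Z, X. nra. }
    rewrite ln_mult in H by lra. lra. }
  set (R0 := Rpower u (- r)).
  assert (HR0' : Rpower (ln Z + c) (- r) <= R0) by (apply Rpower_antimono; lra).
  assert (HR01 : R0 <= 1) by (unfold R0; rewrite <- (Rpower_1_base (- r)); apply Rpower_antimono; lra).
  assert (HR0pos : 0 < Rpower (ln Z + c) (- r)) by apply Rpower_pos.
  assert (HGZ : G q r c (Rpower Z q) <= (1 - q) * Xq * R0 + 1).
  { rewrite EGZ. assert (0 < Rpower Z q) by apply Rpower_pos.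
    apply Rle_trans with (Rpower Z q * R0). apply Rmult_le_compat_l; lra.
    apply Rle_trans with (((1 - q) * Xq + 1) * R0). apply Rmult_le_compat_r. unfold R0; left; apply Rpower_pos. auto.
    nra. }
  assert (T1 := inv_pow_tangent r l u hr ltac:(lra) ltac:(lra)).
  replace (l - u) with a_ in T1 by (unfold u; ring). fold R0 in T1.
  assert (T2 := inv_pow_tangent (r + 1) l u ltac:(lra) ltac:(lra) ltac:(lra)).
  replace (- (r + 1)) with (- r - 1) in T2 by ring. replace (- r - 1 - 1) with (- r - 2) in T2 by ring.
  replace (l - u) with a_ in T2 by (unfold u; ring).
  assert (T3 : Rpower u (- r - 2) <= Rpower l (- r - 2) * C2).
  { eapply Rle_trans. apply (Rpower_antimono (- r - 2) (l / 2) u). lra. lra.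
    unfold Rdiv, C2. rewrite Rpower_mult_distr; lra. }
  assert (HC2 : 0 < C2) by apply Rpower_pos.
  assert (HR : R0 <= Rpower l (- r) + r * a_ * Rpower l (- r - 1) + C3 * Rpower l (- r - 2)).
  { unfold C3. 
    assert (r * a_ * Rpower u (- r - 1) <= r * a_ * (Rpower l (- r - 1) + (r + 1) * a_ * (Rpower l (- r - 2) * C2))).
    { apply Rmult_le_compat_l. nra. 
      assert ((r + 1) * Rpower u (- r - 2) * a_ <= (r + 1) * a_ * (Rpower l (- r - 2) * C2)).
      { replace ((r + 1) * Rpower u (- r - 2) * a_) with ((r + 1) * a_ * Rpower u (- r - 2)) by ring.
        apply Rmult_le_compat_l; nra. }
      lra. }
    replace (r * (r + 1) * a_ ^ 2 * C2 * Rpower l (- r - 2)) with (r * a_ * ((r + 1) * a_ * (Rpower l (- r - 2) * C2))) by ring.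
    lra. }
  assert (0 <= (1 - q) * Xq) by nra.
  assert ((1 - q) * Xq * R0 <= (1 - q) * Xq * (Rpower l (- r) + r * a_ * Rpower l (- r - 1) + C3 * Rpower l (- r - 2))).
  { apply Rmult_le_compat_l; auto. }
  rewrite Ef. lra.
Qed.

Lemma drift_f2 j :
  Dq p f2 j <= p * (q + 1) - p * (r * kap / 2) * (Rpower (INR j + 1) q * Rpower (ln (INR j + 1) + c) (- r - 1)).
Proof.
  rewrite D_formula by auto.
  assert (Hu := up_bound j). assert (Hd := down_bound j). simpl in Hu, Hd.
  set (X := INR j + 1) in *. set (l := ln X + c) in *.
  set (Xq := Rpower X q) in *. set (L0 := Rpower l (- r)) in *. set (L1 := Rpower l (- r - 1)) in *.
  set (L2 := Rpower l (- r - 2)) in *.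
  assert (HX : 1 <= X) by (unfold X; assert (0 <= INR j) by apply pos_INR; lra).
  assert (HlnX : 0 <= ln X) by (rewrite <- ln_1; apply ln_le; lra).
  assert (Hl : c <= l) by (unfold l; lra).
  assert (Hc1 := c_ge1). assert (Hk := kap_pos).
  assert (EL : L1 = l * L2) by (unfold L1, L2; rewrite (Rpower_split l (- r - 1)) by lra; f_equal; f_equal; ring).
  assert (HL2 : 0 < L2) by apply Rpower_pos.
  assert (HXq : 0 < Xq) by apply Rpower_pos.
  assert (H1 : (1 - q) * C3 * L2 <= r * kap / 2 * L1).
  { rewrite EL. apply Rle_trans with (r * kap / 2 * c * L2). apply Rmult_le_compat_r; lra.
    assert (0 <= r * kap / 2) by nra.
    assert (0 <= r * kap / 2 * ((l - c) * L2)) by (apply Rmult_le_pos; [|apply Rmult_le_pos]; lra). nra. }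
  assert (H2 : p * ((1 - q) * C3 * L2) * Xq <= p * (r * kap / 2 * L1) * Xq).
  { apply Rmult_le_compat_r. lra. apply Rmult_le_compat_l; lra. }
  assert (Hd' : p * sum_n (fun m => w p j m * (f2 m - f2 j)) j <=
     p * ((1 - q) * Xq * (L0 + r * a_ * L1 + C3 * L2) + 1 - Xq * L0)) by (apply Rmult_le_compat_l; lra).
  unfold kap in *. nra.
Qed.

End Drift2.


Lemma half_exponent p q : 0 < p < 1 -> 0 < q -> Rpower p q = 1 - q -> q / 2 + Rpower p (q / 2) - 1 < 0.
Proof.
  intros Hp Hq Hpq. set (x := Rpower p (q / 2)).
  assert (Hx2 : x * x = Rpower p q) by (unfold x; rewrite <- Rpower_plus; f_equal; field).
  assert (Hx1 : x < 1).
  { unfold x, Rpower. rewrite <- exp_0. apply exp_increasing.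
    assert (ln p < 0) by (rewrite <- ln_1; apply ln_increasing; lra).
    assert (0 < q / 2) by lra. nra. }
  assert (0 < (1 - x) * (1 - x)) by (apply Rmult_lt_0_compat; lra).
  nra.
Qed.

Lemma lnX1_ge c X : 1 <= X -> 0 <= c -> ln 2 / (ln 2 + c) * (ln X + c) <= ln (X + 1).
Proof.
  intros HX Hc. assert (Hl2 : 0 < ln 2) by (rewrite <- ln_1; apply ln_increasing; lra).
  assert (H1 : ln X <= ln (X + 1)) by (apply ln_le; lra).
  assert (H2 : ln 2 <= ln (X + 1)) by (apply ln_le; lra).
  assert (HlnX : 0 <= ln X) by (rewrite <- ln_1; apply ln_le; lra).
  set (b := ln 2 / (ln 2 + c)).
  assert (Hb : 0 < b <= 1).
  { unfold b. split. apply Rdiv_lt_0_compat; lra. apply (Rmult_le_reg_r (ln 2 + c)). lra.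
    unfold Rdiv. rewrite Rmult_assoc, Rinv_l by lra. lra. }
  assert (Hbc : b * c = (1 - b) * ln 2) by (unfold b; field; lra).
  nra.
Qed.

Lemma part2 p q r : 0 < p < 1 -> 0 < q -> Rpower p q = 1 - q -> 0 < r ->
  forall pi, stationary (qbar p) pi -> Rbar_lt (log_moment pi q r) p_infty.
Proof.
  intros [hp0 hp1] hq0 hpq hr pi Hst.
  assert (hq1 : q < 1) by (assert (H := Rpower_pos p q); lra).
  assert (Ha := a_pos p hp0 hp1).
  assert (Hk := kap_pos p q hq0 hq1 hpq).
  assert (HC3 : 0 <= C3 p r).
  { unfold C3. assert (0 < C2 r) by apply Rpower_pos. assert (0 <= a_ p ^ 2) by (apply pow_le; lra).
    apply Rmult_le_pos; [|lra]. apply Rmult_le_pos; [|lra]. nra. }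
  assert (Hrk : 0 < r * kap p q) by nra.
  set (c := (r + 1) / q + 1 + 2 * a_ p + (a_ p + 1) + 2 * (1 - q) * C3 p r / (r * kap p q)).
  assert (Hrq : 0 < (r + 1) / q) by (apply Rdiv_lt_0_compat; lra).
  assert (Hcc : 0 <= 2 * (1 - q) * C3 p r / (r * kap p q)).
  { apply Rle_mult_inv_pos; auto. assert (0 <= (1 - q) * C3 p r) by nra. lra. }
  assert (hc1 : (r + 1) / q + 1 <= c) by (unfold c; lra).
  assert (hc2 : 2 * a_ p <= c) by (unfold c; lra).
  assert (hc3 : a_ p + 1 <= c) by (unfold c; lra).
  assert (hc4 : (1 - q) * C3 p r <= r * kap p q / 2 * c).
  { assert (r * kap p q / 2 * (2 * (1 - q) * C3 p r / (r * kap p q)) = (1 - q) * C3 p r) by (field; lra).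
    assert (0 <= r * kap p q / 2 * ((r + 1) / q + 1 + 2 * a_ p + (a_ p + 1))).
    { apply Rmult_le_pos; lra. }
    unfold c. lra. }
  set (wv := fun j => p * (r * kap p q / 2) * (Rpower (INR j + 1) q * Rpower (ln (INR j + 1) + c) (- r - 1))).
  assert (Hmp := moment_partial p hp0 hp1 pi Hst (f2 q r c) (f2_mono q r c hq0 hr hc1) (p * (q + 1)) wv
     ltac:(nra) (drift_f2 p hp0 hp1 q r c hq0 hq1 hpq hr hc1 hc2 hc3 hc4)).
  assert (Hc0 : 0 <= c) by lra.
  set (b := ln 2 / (ln 2 + c)).
  assert (Hl2 : 0 < ln 2) by (rewrite <- ln_1; apply ln_increasing; lra).
  assert (Hb : 0 < b) by (unfold b; apply Rdiv_lt_0_compat; lra).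
  set (Mb := Rpower b (- r - 1)).
  assert (HMb : 0 < Mb) by apply Rpower_pos.
  set (Kp := p * (r * kap p q / 2)).
  assert (HKp : 0 < Kp) by (unfold Kp; nra).
  unfold log_moment. apply (psum_lt_bounded _ (Mb / Kp * (p * (q + 1)))).
  - intros k. apply Rmult_le_pos. apply (pi_nn p pi Hst). left; apply Rmult_lt_0_compat; apply Rpower_pos.
  - intros N. apply Rle_trans with (sum_n (fun j => Mb / Kp * (pi j * wv j)) N).
    + apply sum_n_mono_le. intros j _. rewrite S_INR.
      set (X := INR j + 1).
      assert (HX : 1 <= X) by (unfold X; assert (0 <= INR j) by apply pos_INR; lra).
      assert (HlnX : 0 <= ln X) by (rewrite <- ln_1; apply ln_le; lra).
      assert (Hlog := lnX1_ge c X HX Hc0). fold b in Hlog.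
      assert (Hpos : 0 < b * (ln X + c)) by (apply Rmult_lt_0_compat; lra).
      assert (HR : Rpower (ln (X + 1)) (- (r + 1)) <= Mb * Rpower (ln X + c) (- r - 1)).
      { replace (- (r + 1)) with (- r - 1) by ring.
        eapply Rle_trans. apply (Rpower_antimono (- r - 1) (b * (ln X + c))). lra. lra.
        unfold Mb. rewrite Rpower_mult_distr; lra. }
      assert (Hpi := pi_nn p pi Hst j). assert (HXq := Rpower_pos X q).
      unfold wv. fold X. fold Kp.
      replace (Mb / Kp * (pi j * (Kp * (Rpower X q * Rpower (ln X + c) (- r - 1)))))
        with (pi j * (Rpower X q * (Mb * Rpower (ln X + c) (- r - 1)))) by (field; lra).
      apply Rmult_le_compat_l; auto. apply Rmult_le_compat_l; lra.
    + rewrite sum_n_Rscal. apply Rmult_le_compat_l. apply Rle_mult_inv_pos; lra. apply Hmp.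
Qed.

Theorem proposition6 (p q : R) (hp : 0 < p <= 1) (hq : 0 < q) :
  (-1 + q + Rpower p q < 0 ->
     positive_recurrent (qbar p) /\
     (exists pi, stationary (qbar p) pi) /\
     (forall pi, stationary (qbar p) pi -> Rbar_lt (moment pi q) p_infty))
  /\
  (forall r : R, Rpower p q = 1 - q -> p < exp (-1) -> 0 < r ->
     positive_recurrent (qbar p) /\
     (exists pi, stationary (qbar p) pi) /\
     (forall pi, stationary (qbar p) pi -> Rbar_lt (log_moment pi q r) p_infty)).
Proof.
  destruct hp as [hp0 hp1'].
  split.
  - intros H.
    assert (hp1 : p < 1).
    { destruct (Rle_lt_or_eq_dec _ _ hp1') as [Hlt|Heq]; auto. subst. rewrite Rpower_1_base in H. lra. }
    assert (hgs : q + Rpower p q - 1 < 0) by lra.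
    split; [|split].
    + apply (posrec p hp0 hp1 q hq hgs).
    + apply (stat_exists p hp0 hp1 q hq hgs).
    + apply (moment_finite p hp0 hp1 q hq hgs).
  - intros r Hpq Hpe Hr.
    assert (hp1 : p < 1).
    { apply Rlt_trans with (exp (-1)); auto. rewrite <- exp_0. apply exp_increasing. lra. }
    assert (Hs := half_exponent p q (conj hp0 hp1) hq Hpq).
    assert (hs0 : 0 < q / 2) by lra.
    split; [|split].
    + apply (posrec p hp0 hp1 (q / 2) hs0 Hs).
    + apply (stat_exists p hp0 hp1 (q / 2) hs0 Hs).
    + apply part2; auto.
Qed.
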